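(* (a) For all $t>0$, $|E(t)|<M(t)$. (b) There exist $t_0,t_1$ with $0<t_1<t_0<1$ such that $M(t)<\operatorname{arccot}t$ for all $t>t_0$ and $|E(t)|<\operatorname{arccot}t$ for all $t>t_1$. (c) For all $t\geq0$, $|\mathrm{si}(t)|\leq\operatorname{arccot}t$, with equality only for $t=0$.
   Context: For $t>0$, $E(t)=\int_0^\infty \frac{e^{iu}}{u+t}\,du$ (improper integral) and $M(t)=\int_0^\infty \frac{e^{-tu}}{\sqrt{u^2+1}}\,du$. The complementary sine integral is $\mathrm{si}(t)=-\int_t^\infty\frac{\sin u}{u}\,du$ for $t\ge0$ (so $\mathrm{si}(0)=-\pi/2$). *)

(* Defs.v *)
From Stdlib Require Import Reals.
From Coquelicot Require Import Coquelicot.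
Open Scope R_scope.

Definition int_to_infty (f : R -> R) (a : R) : R :=
  RInt_gen f (at_point a) (Rbar_locally p_infty).

(* E(t) = int_0^oo e^{iu}/(u+t) du, computed componentwise:
   Re E = int cos u/(u+t), Im E = int sin u/(u+t). *)
Definition E (t : R) : C :=
  (int_to_infty (fun u => cos u / (u + t)) 0,
   int_to_infty (fun u => sin u / (u + t)) 0).

Definition M (t : R) : R :=
  int_to_infty (fun u => exp (- (t * u)) / sqrt (u ^ 2 + 1)) 0.

Definition si (t : R) : R :=
  - int_to_infty (fun u => sin u / u) t.

Definition arccot (t : R) : R := PI / 2 - atan t.

(* Main.v *)
Require Import Defs.
From Stdlib Require Import Reals Lra Psatz Lia FunctionalExtensionality List.
From Coquelicot Require Import Coquelicot.
Open Scope R_scope.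
Import ListNotations.

Definition HasInt (f : R -> R) (a l : R) : Prop :=
  (forall b, a <= b -> ex_RInt f a b) /\ is_lim (fun b => RInt f a b) p_infty l.

Lemma HasInt_gen f a l : HasInt f a l ->
  is_RInt_gen f (at_point a) (Rbar_locally p_infty) l.
Proof.
  intros [Hex Hlim] P HP.
  destruct (Hlim P HP) as [M HM].
  apply (Filter_prod _ _ _ (fun x => x = a) (fun b => Rmax M a < b)).
  - reflexivity.
  - exists (Rmax M a); auto.
  - intros x b -> Hb. simpl. assert (Hab : a <= b) by (pose proof (Rmax_r M a); lra).
    exists (RInt f a b). split.
    + exact (RInt_correct f a b (Hex b Hab)).
    + apply HM. pose proof (Rmax_l M a); lra.
Qed.

Lemma HasInt_unique f a l : HasInt f a l -> int_to_infty f a = l.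
Proof.
  intros H. unfold int_to_infty. apply is_RInt_gen_unique. now apply HasInt_gen.
Qed.

Lemma ex_RInt_plusR f g a b : ex_RInt f a b -> ex_RInt g a b -> ex_RInt (fun x => f x + g x) a b.
Proof. intros; now apply (ex_RInt_plus f g). Qed.
Lemma RInt_plusR f g a b : ex_RInt f a b -> ex_RInt g a b ->
  RInt (fun x => f x + g x) a b = RInt f a b + RInt g a b.
Proof. intros; now apply (RInt_plus f g). Qed.
Lemma ex_RInt_scalR f c a b : ex_RInt f a b -> ex_RInt (fun x => c * f x) a b.
Proof. intros; now apply (ex_RInt_scal f a b c). Qed.
Lemma RInt_scalR f c a b : ex_RInt f a b -> RInt (fun x => c * f x) a b = c * RInt f a b.
Proof. intros; now apply (RInt_scal f a b c). Qed.

Lemma is_lim_pinfty_eps (F : R -> R) (l : R) :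
  (forall eps, 0 < eps -> exists B, forall b, B < b -> Rabs (F b - l) < eps) ->
  is_lim F p_infty l.
Proof.
  intros H. apply is_lim_spec. intros eps. destruct (H eps (cond_pos eps)) as [B HB].
  exists B. exact HB.
Qed.

Lemma is_lim_pinfty_bound (F : R -> R) (l B C : R) :
  (forall b, B < b -> Rabs (F b - l) <= C / b) -> is_lim F p_infty l.
Proof.
  intros H. apply is_lim_pinfty_eps. intros eps Heps.
  exists (Rmax (Rmax B 1) (Rabs C / eps)). intros b Hb.
  pose proof (Rmax_l (Rmax B 1) (Rabs C / eps)). pose proof (Rmax_r (Rmax B 1) (Rabs C / eps)).
  pose proof (Rmax_l B 1). pose proof (Rmax_r B 1).
  eapply Rle_lt_trans. apply H. lra.
  assert (0 < b) by lra.
  apply (Rle_lt_trans _ (Rabs C / b)).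
  { unfold Rdiv. apply Rmult_le_compat_r. left; now apply Rinv_0_lt_compat. apply Rle_abs. }
  apply (Rmult_lt_reg_r b). lra. unfold Rdiv. rewrite Rmult_assoc, Rinv_l by lra.
  assert (Rabs C / eps < b) by lra.
  apply (Rmult_lt_compat_r eps) in H5; [|lra]. unfold Rdiv in H5. rewrite Rmult_assoc, Rinv_l in H5 by lra. lra.
Qed.

Lemma HasInt_of_lim (f : R -> R) (a : R) (F : R -> R) (l : R) :
  (forall b, a <= b -> is_RInt f a b (F b)) -> is_lim F p_infty l -> HasInt f a l.
Proof.
  intros H Hl. split.
  - intros b Hb. eexists; now apply H.
  - apply (is_lim_ext_loc F). exists a. intros b Hb. symmetry. apply is_RInt_unique, H. lra.
    exact Hl.
Qed.

Lemma HasInt_ext f g a l : (forall x, a <= x -> f x = g x) -> HasInt f a l -> HasInt g a l.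
Proof.
  intros Hfg [Hex Hl]. split.
  - intros b Hb. apply (ex_RInt_ext f). 2: now apply Hex.
    intros x Hx. apply Hfg. rewrite Rmin_left in Hx by lra. lra.
  - apply (is_lim_ext_loc (fun b => RInt f a b)). exists a. intros b Hb.
    apply RInt_ext. intros x Hx. apply Hfg. rewrite Rmin_left in Hx by lra. lra.
    exact Hl.
Qed.

Lemma HasInt_plus f g a l1 l2 : HasInt f a l1 -> HasInt g a l2 -> HasInt (fun x => f x + g x) a (l1 + l2).
Proof.
  intros [Hf Hfl] [Hg Hgl]. split.
  - intros b Hb. apply ex_RInt_plusR; auto.
  - apply (is_lim_ext_loc (fun b => RInt f a b + RInt g a b)). exists a. intros b Hb.
    symmetry. apply RInt_plusR; [apply Hf|apply Hg]; lra.
    now apply is_lim_plus'.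
Qed.

Lemma HasInt_scal f c a l : HasInt f a l -> HasInt (fun x => c * f x) a (c * l).
Proof.
  intros [Hf Hfl]. split.
  - intros b Hb. apply ex_RInt_scalR; auto.
  - apply (is_lim_ext_loc (fun b => c * RInt f a b)). exists a. intros b Hb.
    symmetry. apply RInt_scalR; apply Hf; lra.
    apply (is_lim_scal_l _ c _ l) in Hfl. exact Hfl.
Qed.

Lemma HasInt_minus f g a l1 l2 : HasInt f a l1 -> HasInt g a l2 -> HasInt (fun x => f x - g x) a (l1 - l2).
Proof.
  intros H1 H2. apply (HasInt_scal g (-1)) in H2.
  apply (HasInt_ext (fun x => f x + -1 * g x)). intros; ring.
  replace (l1 - l2) with (l1 + -1 * l2) by ring. now apply HasInt_plus.
Qed.

Lemma HasInt_le f g a l1 l2 : (forall x, a <= x -> f x <= g x) -> HasInt f a l1 -> HasInt g a l2 -> l1 <= l2.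
Proof.
  intros Hfg [Hf Hfl] [Hg Hgl].
  assert (H := is_lim_le_loc (fun b => RInt f a b) (fun b => RInt g a b) p_infty l1 l2).
  simpl in H. apply H; auto. exists a. intros b Hb. apply RInt_le; [lra|apply Hf; lra|apply Hg; lra|].
  intros; apply Hfg; lra.
Qed.

Lemma HasInt_ub f a l K : (forall b, a < b -> RInt f a b <= K) -> HasInt f a l -> l <= K.
Proof.
  intros HK [Hf Hfl].
  assert (H := is_lim_le_loc (fun b => RInt f a b) (fun b => K) p_infty l K).
  simpl in H. apply H; auto. exists a. auto. apply is_lim_const.
Qed.

Lemma HasInt_lb f a l K : (forall b, a < b -> K <= RInt f a b) -> HasInt f a l -> K <= l.
Proof.
  intros HK [Hf Hfl].
  assert (H := is_lim_le_loc (fun b => K) (fun b => RInt f a b) p_infty K l).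
  simpl in H. apply H; auto. exists a. auto. apply is_lim_const.
Qed.

Lemma ex_RInt_cont (f : R -> R) u v : (forall x, continuous f x) -> ex_RInt f u v.
Proof. intros H. apply (ex_RInt_continuous (V:=R_CompleteNormedModule)). intros; apply H. Qed.

Lemma HasInt_mono (f : R -> R) (a K : R) : (forall x, continuous f x) -> (forall x, a <= x -> 0 <= f x) ->
  (forall b, a <= b -> RInt f a b <= K) -> exists l, HasInt f a l.
Proof.
  intros Hc Hpos HK.
  assert (Hex : forall u v, ex_RInt f u v) by (intros; apply ex_RInt_cont; auto).
  set (Ev := fun y => exists b, a <= b /\ y = RInt f a b).
  assert (Hb : bound Ev) by (exists K; intros y [b [Hab ->]]; auto).
  assert (Hne : exists y, Ev y) by (exists (RInt f a a); exists a; split; [lra|auto]).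
  destruct (completeness Ev Hb Hne) as [l [Hub Hlub]].
  exists l. split; [intros; apply Hex|].
  apply is_lim_pinfty_eps. intros eps Heps.
  assert (exists b0, a <= b0 /\ l - eps < RInt f a b0) as [b0 [Hab0 Hb0]].
  { apply Classical_Prop.NNPP. intros Hn.
    assert (l <= l - eps); [|lra].
    apply Hlub. intros y [b [Hab ->]].
    apply Rnot_lt_le. intros Hlt. apply Hn. exists b; split; auto. }
  exists b0. intros b Hbb.
  assert (RInt f a b <= l) by (apply Hub; exists b; split; [lra|auto]).
  assert (RInt f a b0 <= RInt f a b).
  { rewrite <- (RInt_Chasles f a b0 b) by apply Hex.
    assert (0 <= RInt f b0 b). { apply RInt_ge_0; auto; try lra. intros; apply Hpos; lra. }
    change (plus (RInt f a b0) (RInt f b0 b)) with (RInt f a b0 + RInt f b0 b). lra. }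
  rewrite Rabs_left1 by lra. lra.
Qed.

Lemma exp_taylor1_bound y : Rabs (exp y - 1 - y) <= y ^ 2 * exp (Rabs y).
Proof.
  pose proof (exp_ineq1_le y) as H1. pose proof (exp_ineq1_le (-y)) as H2.
  assert (HAB : exp y * exp (-y) = 1) by (rewrite <- exp_plus; replace (y + - y) with 0 by ring; apply exp_0).
  pose proof (exp_pos y). pose proof (exp_pos (-y)).
  rewrite Rabs_pos_eq by lra.
  destruct (Rle_dec 0 y).
  - rewrite Rabs_pos_eq by lra.
    assert (E1 : y * (exp y - 1) - (exp y - 1 - y) = exp y * (exp (-y) - (1 - y))) by nra.
    assert (E2 : y^2 * exp y - y * (exp y - 1) = y * (exp y * (exp (-y) - 1 + y))) by nra.
    assert (0 <= exp y * (exp (-y) - (1 - y))) by nra.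
    assert (0 <= y * (exp y * (exp (-y) - 1 + y))) by (apply Rmult_le_pos; nra).
    lra.
  - rewrite Rabs_left by lra.
    assert (exp (-y) >= 1) by nra.
    assert (exp y * (1 - y) <= 1) by nra.
    assert (exp y - 1 - y <= - y * (1 - exp y)) by nra.
    assert (1 - exp y <= - y) by lra.
    assert (- y * (1 - exp y) <= y ^ 2) by nra.
    nra.
Qed.

Lemma exp_sq_lb x : 0 <= x -> x ^ 2 / 4 <= exp x.
Proof.
  intros Hx. replace x with (x/2 + x/2) at 2 by field. rewrite exp_plus.
  pose proof (exp_ineq1_le (x/2)). nra.
Qed.

Lemma cont_mul (f g : R -> R) x : continuous f x -> continuous g x -> continuous (fun y => f y * g y) x.
Proof. intros; now apply (continuous_mult f g). Qed.

Lemma cont_of_deriv (f : R -> R) x : ex_derive f x -> continuous f x.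
Proof. intros H. now apply (ex_derive_continuous (K:=R_AbsRing) (V:=R_NormedModule)). Qed.

Lemma cont_expl t x : continuous (fun x => exp (-(t*x))) x.
Proof. apply cont_of_deriv. auto_derive. auto. Qed.

Lemma exp_RInt t a b : t <> 0 ->
  is_RInt (fun x => exp (-(t*x))) a b ((exp (-(t*a)) - exp (-(t*b))) / t).
Proof.
  intros Ht.
  assert (H := is_RInt_derive (V:=R_CompleteNormedModule) (fun x => - exp (-(t*x)) / t) (fun x => exp (-(t*x))) a b).
  replace ((exp (-(t*a)) - exp (-(t*b))) / t) with (minus (- exp (-(t*b)) / t) (- exp (-(t*a)) / t)).
  apply H.
  - intros x _. auto_derive. auto. field. auto.
  - intros x _. apply cont_expl.
  - unfold minus, plus, opp; simpl. field. auto.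
Qed.

Lemma xexp_RInt c a b : c <> 0 ->
  is_RInt (fun x => x * exp (-(c*x))) a b
   ((a / c + 1 / c^2) * exp (-(c*a)) - (b / c + 1 / c^2) * exp (-(c*b))).
Proof.
  intros Hc.
  assert (H := is_RInt_derive (V:=R_CompleteNormedModule) (fun x => - (x / c + 1 / c^2) * exp (-(c*x))) (fun x => x * exp (-(c*x))) a b).
  replace ((a / c + 1 / c^2) * exp (-(c*a)) - (b / c + 1 / c^2) * exp (-(c*b))) with
    (minus (- (b / c + 1 / c^2) * exp (-(c*b))) (- (a / c + 1 / c^2) * exp (-(c*a)))).
  apply H.
  - intros x _. auto_derive. auto. field. auto.
  - intros x _. apply cont_mul. apply continuous_id. apply cont_expl.
  - unfold minus, plus, opp; simpl. ring.
Qed.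

Lemma HasInt_exp t : 0 < t -> HasInt (fun x => exp (-(t*x))) 0 (1 / t).
Proof.
  intros Ht. apply (HasInt_of_lim _ _ (fun b => (exp (-(t*0)) - exp (-(t*b))) / t)).
  - intros b _. apply exp_RInt. lra.
  - apply (is_lim_pinfty_bound _ _ 0 (1 / t^2)). intros b Hb.
    replace (-(t*0)) with 0 by ring. rewrite exp_0.
    replace ((1 - exp (-(t*b))) / t - 1 / t) with (- (exp (-(t*b)) / t)) by (field; lra).
    rewrite Rabs_Ropp. pose proof (exp_pos (-(t*b))).
    rewrite Rabs_pos_eq by (apply Rle_mult_inv_pos; lra).
    pose proof (exp_ineq1_le (t*b)) as Hs.
    assert (HE : exp (-(t*b)) * exp (t*b) = 1) by (rewrite <- exp_plus; replace (-(t*b) + t*b) with 0 by ring; apply exp_0).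
    assert (0 < t * b) by nra.
    assert (exp (-(t*b)) * (t * b) <= 1) by nra.
    replace (exp (-(t*b)) / t) with (exp (-(t*b)) * (t * b) * (1 / (t^2 * b))) by (field; lra).
    replace (1 / t^2 / b) with (1 * (1 / (t^2 * b))) by (field; lra).
    apply Rmult_le_compat_r; [|lra]. apply Rlt_le, Rdiv_lt_0_compat; [lra|]. apply Rmult_lt_0_compat; nra.
Qed.

Lemma HasInt_xexp c : 0 < c -> HasInt (fun x => x * exp (-(c*x))) 0 (1 / c^2).
Proof.
  intros Hc. apply (HasInt_of_lim _ _ (fun b => (0 / c + 1 / c^2) * exp (-(c*0)) - (b / c + 1 / c^2) * exp (-(c*b)))).
  - intros b _. apply xexp_RInt. lra.
  - apply (is_lim_pinfty_bound _ _ 0 (8 / c^3)). intros b Hb.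
    replace (-(c*0)) with 0 by ring. rewrite exp_0.
    replace ((0 / c + 1 / c^2) * 1 - (b / c + 1 / c^2) * exp (-(c*b)) - 1 / c^2)
      with (- ((b / c + 1 / c^2) * exp (-(c*b)))) by (field; lra).
    rewrite Rabs_Ropp. pose proof (exp_pos (-(c*b))).
    assert (0 < c * b) by nra.
    rewrite Rabs_pos_eq.
    2:{ apply Rmult_le_pos; [|lra]. assert (0 <= b / c) by (apply Rle_mult_inv_pos; lra).
        assert (0 <= 1 / c^2) by (apply Rle_mult_inv_pos; [lra|nra]). lra. }
    pose proof (exp_sq_lb (c*b)) as Hs. pose proof (exp_ineq1_le (c*b)) as Hs1.
    assert (HE : exp (-(c*b)) * exp (c*b) = 1) by (rewrite <- exp_plus; replace (-(c*b) + c*b) with 0 by ring; apply exp_0).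
    set (E := exp (-(c*b))) in *. set (A := exp (c*b)) in *.
    assert (E * (c*b)^2 <= 4) by nra.
    assert (E * (c*b) <= 1) by nra.
    (* (b/c + 1/c^2) E = (1/c^3) (cb E + E) ... bound by (1/c^3)(4/(cb) + 1/(cb)) *)
    replace ((b / c + 1 / c^2) * E) with ((E * (c*b)^2 + E * (c*b)) * (1 / (c^3 * b))) by (field; lra).
    replace (8 / c^3 / b) with (8 * (1 / (c^3 * b))) by (field; lra).
    apply Rmult_le_compat_r; [|lra]. apply Rlt_le, Rdiv_lt_0_compat; [lra|]. apply Rmult_lt_0_compat; [|lra]. apply pow_lt; lra.
Qed.

Definition Lap (g : R -> R) (t : R) : R := int_to_infty (fun x => exp (-(t*x)) * g x) 0.

Lemma Lap_spec (g : R -> R) (K t : R) : (forall x, continuous g x) -> (forall x, 0 <= x -> 0 <= g x <= K) -> 0 < t ->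
  HasInt (fun x => exp (-(t*x)) * g x) 0 (Lap g t) /\ 0 <= Lap g t <= K / t.
Proof.
  intros Hc Hg Ht.
  assert (HK : 0 <= K) by (destruct (Hg 0); lra).
  assert (Hcont : forall x, continuous (fun x => exp (-(t*x)) * g x) x).
  { intros x. apply cont_mul. apply cont_expl. apply Hc. }
  assert (Hex : forall u v, ex_RInt (fun x => exp (-(t*x)) * g x) u v) by (intros; now apply ex_RInt_cont).
  assert (Hle : forall b, 0 <= b -> RInt (fun x => exp (-(t*x)) * g x) 0 b <= K / t).
  { intros b Hb. apply Rle_trans with (RInt (fun x => K * exp (-(t*x))) 0 b).
    - apply RInt_le; auto. apply ex_RInt_scalR. eexists; apply exp_RInt; lra.
      intros x Hx. rewrite (Rmult_comm K). apply Rmult_le_compat_l. apply Rlt_le, exp_pos. apply Hg; lra.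
    - rewrite RInt_scalR by (eexists; apply exp_RInt; lra).
      rewrite (is_RInt_unique _ _ _ _ (exp_RInt t 0 b ltac:(lra))).
      replace (-(t*0)) with 0 by ring. rewrite exp_0. pose proof (exp_pos (-(t*b))).
      replace (K / t) with (K * (1 / t)) by (field; lra). apply Rmult_le_compat_l; auto.
      unfold Rdiv. apply Rmult_le_compat_r. left; now apply Rinv_0_lt_compat. lra. }
  assert (Hpos : forall x, 0 <= x -> 0 <= exp (-(t*x)) * g x).
  { intros x Hx. apply Rmult_le_pos. apply Rlt_le, exp_pos. apply Hg; auto. }
  destruct (HasInt_mono _ 0 (K/t) Hcont Hpos Hle) as [l Hl].
  assert (HL : Lap g t = l) by (unfold Lap; now apply HasInt_unique).
  rewrite HL. split; auto. split.
  - apply (HasInt_lb (fun x => exp (-(t*x)) * g x) 0 l 0); auto. intros b Hb. apply RInt_ge_0; auto; try lra.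
    intros; apply Hpos; lra.
  - apply (HasInt_ub (fun x => exp (-(t*x)) * g x) 0 l (K/t)); auto. intros; apply Hle; lra.
Qed.

Lemma Lap_deriv (g : R -> R) (K K' s : R) : (forall x, continuous g x) ->
  (forall x, 0 <= x -> 0 <= g x <= K) -> (forall x, 0 <= x -> 0 <= x * g x <= K') -> 0 < s ->
  is_derive (Lap g) s (- Lap (fun x => x * g x) s).
Proof.
  intros Hc Hg Hxg Hs.
  assert (HK' : 0 <= K') by (destruct (Hxg 0); lra).
  assert (Hcx : forall x, continuous (fun x => x * g x) x).
  { intros x. apply cont_mul. apply continuous_id. apply Hc. }
  apply is_derive_Reals. intros eps Heps.
  set (d := Rmin (s/2) (eps * s^2 / (4 * K' + 1))).
  assert (Hd : 0 < d).
  { unfold d. apply Rmin_pos. lra. apply Rdiv_lt_0_compat. apply Rmult_lt_0_compat; [lra| apply pow_lt; lra]. lra. }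
  exists (mkposreal d Hd). intros h Hh0 Hhd. simpl in Hhd.
  assert (Hh1 : Rabs h <= s / 2) by (eapply Rle_trans; [left; apply Hhd| apply Rmin_l]).
  assert (Hh2 : Rabs h * (4 * K' + 1) < eps * s^2).
  { assert (Rabs h < eps * s^2 / (4*K'+1)) by (eapply Rlt_le_trans; [apply Hhd|apply Rmin_r]).
    apply (Rmult_lt_compat_r (4*K'+1)) in H; [|lra]. unfold Rdiv in H.
    rewrite Rmult_assoc, Rinv_l in H by lra. lra. }
  set (c := s - Rabs h).
  assert (Hc0 : s / 2 <= c) by (unfold c; lra).
  destruct (Lap_spec g K (s+h) Hc Hg) as [H1 _]. { pose proof (Rle_abs (-h)). rewrite Rabs_Ropp in H. lra. }
  destruct (Lap_spec g K s Hc Hg Hs) as [H0 _].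
  destruct (Lap_spec (fun x => x * g x) K' s Hcx Hxg Hs) as [H2 _].
  set (Delta := Lap g (s + h) - Lap g s + h * Lap (fun x => x * g x) s).
  assert (HD : HasInt (fun x => (exp (-((s+h)*x)) * g x - exp (-(s*x)) * g x) + h * (exp (-(s*x)) * (x * g x))) 0 Delta).
  { apply HasInt_plus. apply HasInt_minus; auto. apply HasInt_scal; auto. }
  assert (HB := HasInt_scal _ (h^2 * K') _ _ (HasInt_xexp c ltac:(lra))).
  assert (Hpt : forall x, 0 <= x -> Rabs ((exp (-((s+h)*x)) * g x - exp (-(s*x)) * g x) + h * (exp (-(s*x)) * (x * g x)))
     <= h^2 * K' * (x * exp (-(c*x)))).
  { intros x Hx.
    replace ((exp (-((s+h)*x)) * g x - exp (-(s*x)) * g x) + h * (exp (-(s*x)) * (x * g x)))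
      with (exp (-(s*x)) * g x * (exp (-(h*x)) - 1 - (-(h*x)))).
    2:{ replace (-((s+h)*x)) with (-(s*x) + -(h*x)) by ring. rewrite exp_plus. ring. }
    pose proof (exp_taylor1_bound (-(h*x))) as Ht.
    rewrite Rabs_Ropp, Rabs_mult, (Rabs_pos_eq x Hx) in Ht.
    destruct (Hg x Hx) as [Hg0 _]. destruct (Hxg x Hx) as [Hxg0 Hxg1].
    pose proof (exp_pos (-(s*x))).
    rewrite Rabs_mult, (Rabs_pos_eq (exp (-(s*x) ) * g x)) by (apply Rmult_le_pos; lra).
    replace (exp (-(c*x))) with (exp (-(s*x)) * exp (Rabs h * x)).
    2:{ rewrite <- exp_plus. f_equal. unfold c. ring. }
    pose proof (exp_pos (Rabs h * x)).
    replace ((- (h * x)) ^ 2) with (h^2 * x^2) in Ht by ring.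
    apply Rle_trans with (exp (-(s*x)) * g x * (h^2 * x^2 * exp (Rabs h * x))).
    apply Rmult_le_compat_l; auto. apply Rmult_le_pos; lra.
    replace (exp (-(s*x)) * g x * (h^2 * x^2 * exp (Rabs h * x))) with
      (h^2 * (x * g x) * (x * (exp (-(s*x)) * exp (Rabs h * x)))) by ring.
    apply Rmult_le_compat_r. apply Rmult_le_pos; [lra|]. apply Rmult_le_pos; lra.
    apply Rmult_le_compat_l. apply pow2_ge_0. lra. }
  assert (HDle : Delta <= h^2 * K' * (1 / c^2)).
  { apply (HasInt_le (fun x => (exp (-((s+h)*x)) * g x - exp (-(s*x)) * g x) + h * (exp (-(s*x)) * (x * g x))) (fun x => h^2 * K' * (x * exp (-(c*x)))) 0 Delta (h^2*K'*(1/c^2))); [|exact HD|exact HB].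
    intros x Hx. eapply Rle_trans; [apply Rle_abs| apply Hpt; auto]. }
  assert (HDge : - (h^2 * K' * (1 / c^2)) <= Delta).
  { apply (HasInt_le (fun x => - (h^2 * K' * (x * exp (-(c*x))))) (fun x => (exp (-((s+h)*x)) * g x - exp (-(s*x)) * g x) + h * (exp (-(s*x)) * (x * g x))) 0).
    intros x Hx. pose proof (Hpt x Hx). apply Rabs_le_between in H. lra. 2: exact HD.
    apply (HasInt_ext (fun x => -1 * (h^2 * K' * (x * exp (-(c*x)))))). intros; ring.
    replace (- (h^2 * K' * (1 / c^2))) with (-1 * (h^2 * K' * (1 / c^2))) by ring.
    now apply HasInt_scal. }
  assert (Hc2 : 1 / c^2 <= 4 / s^2).
  { apply (Rmult_le_reg_r (c^2 * s^2)). apply Rmult_lt_0_compat; apply pow_lt; lra.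
    field_simplify; try lra. nra. }
  assert (HabsD : Rabs Delta <= h^2 * (4 * K' / s^2)).
  { apply Rabs_le. assert (h^2 * K' * (1 / c^2) <= h^2 * (4 * K' / s^2)).
    { replace (h^2 * (4 * K' / s^2)) with (h^2 * K' * (4 / s^2)) by (field; lra).
      apply Rmult_le_compat_l. apply Rmult_le_pos; [apply pow2_ge_0|lra]. auto. }
    lra. }
  replace ((Lap g (s + h) - Lap g s) / h - - Lap (fun x => x * g x) s) with (Delta / h) by (unfold Delta; field; auto).
  unfold Rdiv. rewrite Rabs_mult, Rabs_Rinv by auto.
  apply (Rmult_lt_reg_r (Rabs h)). now apply Rabs_pos_lt.
  rewrite Rmult_assoc, Rinv_l by (now apply Rabs_no_R0).
  eapply Rle_lt_trans. rewrite Rmult_1_r. apply HabsD.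
  replace (h^2) with (Rabs h * Rabs h) by (rewrite <- Rabs_mult, Rabs_pos_eq; [ring|nra]).
  assert (0 < Rabs h) by (now apply Rabs_pos_lt).
  assert (Rabs h * (4 * K') < eps * s^2) by nra.
  assert (Rabs h * (4 * K' / s^2) < eps).
  { apply (Rmult_lt_reg_r (s^2)). nra. unfold Rdiv. field_simplify; lra. }
  nra.
Qed.

Lemma HasInt_lb' f a l K B : (forall b, B < b -> K <= RInt f a b) -> HasInt f a l -> K <= l.
Proof.
  intros HK [Hf Hfl].
  assert (H := is_lim_le_loc (fun b => K) (fun b => RInt f a b) p_infty K l).
  simpl in H. apply H; auto. exists B. auto. apply is_lim_const.
Qed.

Lemma RInt_mono_b (f : R -> R) a b c : a <= b <= c -> (forall x, continuous f x) ->
  (forall x, b <= x <= c -> 0 <= f x) -> RInt f a b <= RInt f a c.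
Proof.
  intros Hb Hc Hp. rewrite <- (RInt_Chasles f a b c) by (apply ex_RInt_cont; auto).
  assert (0 <= RInt f b c). { apply RInt_ge_0; try lra. apply ex_RInt_cont; auto. intros; apply Hp; lra. }
  change (plus (RInt f a b) (RInt f b c)) with (RInt f a b + RInt f b c). lra.
Qed.

Ltac side := repeat split; try lra; try nra;
  try (apply Rgt_not_eq; apply sqrt_lt_R0; nra); try (apply Rgt_not_eq; nra); try (apply Rlt_not_eq; nra).

Lemma exp_le_mono x y : x <= y -> exp x <= exp y.
Proof. intros [H|H]. left; now apply exp_increasing. subst; lra. Qed.

Lemma sq_ge1 x : 0 <= x -> 1 <= x^2 -> 1 <= x.
Proof.
  intros H0 H1. destruct (Rle_lt_dec 1 x) as [H|H]; auto.
  assert (x^2 < 1); [|lra]. replace (x^2) with (x*x) by ring.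
  apply Rle_lt_trans with (x * 1). apply Rmult_le_compat_l; lra. lra.
Qed.

Definition g1 (x : R) : R := 1 / (1 + x^2).
Definition g2 (x : R) : R := x / (1 + x^2).
Definition Ls (t : R) : R := Lap g1 t.
Definition Lc (t : R) : R := Lap g2 t.

Lemma g1_cont x : continuous g1 x.
Proof. apply cont_of_deriv. unfold g1. auto_derive. nra. Qed.
Lemma g2_cont x : continuous g2 x.
Proof. apply cont_of_deriv. unfold g2. auto_derive. nra. Qed.
Lemma g1_bnd x : 0 <= x -> 0 <= g1 x <= 1.
Proof. intros. unfold g1. split. apply Rle_mult_inv_pos; nra.
  apply (Rmult_le_reg_r (1 + x^2)). nra. field_simplify; nra. Qed.
Lemma g2_bnd x : 0 <= x -> 0 <= g2 x <= 1.
Proof. intros. unfold g2. split. apply Rle_mult_inv_pos; nra.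
  apply (Rmult_le_reg_r (1 + x^2)). nra. field_simplify; nra. Qed.
Lemma xg1_bnd x : 0 <= x -> 0 <= x * g1 x <= 1.
Proof. intros. replace (x * g1 x) with (g2 x) by (unfold g1, g2; field; nra). now apply g2_bnd. Qed.
Lemma xg2_bnd x : 0 <= x -> 0 <= x * g2 x <= 1.
Proof. intros. unfold g2. split. apply Rmult_le_pos; auto. apply Rle_mult_inv_pos; nra.
  apply (Rmult_le_reg_r (1 + x^2)). nra. field_simplify; nra. Qed.

Lemma Ls_spec t : 0 < t -> HasInt (fun x => exp (-(t*x)) * g1 x) 0 (Ls t) /\ 0 <= Ls t <= 1 / t.
Proof. intros. apply Lap_spec; auto. apply g1_cont. apply g1_bnd. Qed.
Lemma Lc_spec t : 0 < t -> HasInt (fun x => exp (-(t*x)) * g2 x) 0 (Lc t) /\ 0 <= Lc t <= 1 / t.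
Proof. intros. apply Lap_spec; auto. apply g2_cont. apply g2_bnd. Qed.

Lemma HasInt_uniq f a l1 l2 : HasInt f a l1 -> HasInt f a l2 -> l1 = l2.
Proof. intros H1 H2. rewrite <- (HasInt_unique _ _ _ H1). now apply HasInt_unique. Qed.

Lemma Ls_deriv t : 0 < t -> is_derive Ls t (- Lc t).
Proof.
  intros Ht. unfold Ls, Lc.
  replace (Lap g2 t) with (Lap (fun x => x * g1 x) t).
  apply (Lap_deriv g1 1 1); auto. apply g1_cont. apply g1_bnd. apply xg1_bnd.
  f_equal. apply functional_extensionality. intros x. unfold g1, g2. field. nra.
Qed.

Lemma Lc_deriv t : 0 < t -> is_derive Lc t (Ls t - 1 / t).
Proof.
  intros Ht. unfold Lc.
  replace (Ls t - 1 / t) with (- Lap (fun x => x * g2 x) t).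
  apply (Lap_deriv g2 1 1); auto. apply g2_cont. apply g2_bnd. apply xg2_bnd.
  destruct (Lap_spec (fun x => x * g2 x) 1 t) as [H _]; auto.
  intros x. apply cont_mul. apply continuous_id. apply g2_cont. apply xg2_bnd.
  assert (H2 := HasInt_minus _ _ _ _ _ (HasInt_exp t Ht) (proj1 (Ls_spec t Ht))).
  assert (Heq : Lap (fun x => x * g2 x) t = 1 / t - Ls t).
  { apply (HasInt_uniq _ _ _ _ H). apply (HasInt_ext _ _ _ _ (fun x _ => eq_refl) ) in H2.
    eapply HasInt_ext; [|exact H2]. intros x _. unfold g1, g2. field. nra. }
  rewrite Heq. ring.
Qed.

Definition Pc (t u : R) : R := sin u * Ls (u + t) - cos u * Lc (u + t).
Definition Ps (t u : R) : R := - (sin u * Lc (u + t) + cos u * Ls (u + t)).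

Lemma Pc_deriv t u : 0 < u + t -> is_derive (Pc t) u (cos u / (u + t)).
Proof.
  intros H. unfold Pc.
  assert (HLs := Ls_deriv _ H). assert (HLc := Lc_deriv _ H).
  auto_derive.
  - split. exists (- Lc (u+t)). exact HLs. split; auto. exists (Ls (u+t) - 1/(u+t)). exact HLc. auto.
  - replace (Derive (fun x => Ls x) (u + t)) with (- Lc (u+t)) by (symmetry; now apply is_derive_unique).
    replace (Derive (fun x => Lc x) (u + t)) with (Ls (u+t) - 1/(u+t)) by (symmetry; now apply is_derive_unique).
    field. lra.
Qed.

Lemma Ps_deriv t u : 0 < u + t -> is_derive (Ps t) u (sin u / (u + t)).
Proof.
  intros H. unfold Ps.
  assert (HLs := Ls_deriv _ H). assert (HLc := Lc_deriv _ H).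
  auto_derive.
  - split. exists (Ls (u+t) - 1/(u+t)). exact HLc. split; auto. exists (- Lc (u+t)). exact HLs. auto.
  - replace (Derive (fun x => Ls x) (u + t)) with (- Lc (u+t)) by (symmetry; now apply is_derive_unique).
    replace (Derive (fun x => Lc x) (u + t)) with (Ls (u+t) - 1/(u+t)) by (symmetry; now apply is_derive_unique).
    field. lra.
Qed.

Lemma Pc_bound t u : 0 < t -> 0 <= u -> Rabs (Pc t u) <= 2 / (u + t).
Proof.
  intros Ht Hu. unfold Pc. destruct (Ls_spec (u+t)) as [_ [H1 H2]]; [lra|].
  destruct (Lc_spec (u+t)) as [_ [H3 H4]]; [lra|].
  pose proof (SIN_bound u). pose proof (COS_bound u).
  eapply Rle_trans. apply Rabs_triang. rewrite Rabs_Ropp, !Rabs_mult.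
  rewrite (Rabs_pos_eq (Ls _)), (Rabs_pos_eq (Lc _)) by lra.
  assert (Rabs (sin u) <= 1) by (apply Rabs_le; lra).
  assert (Rabs (cos u) <= 1) by (apply Rabs_le; lra).
  replace (2 / (u + t)) with (1 / (u+t) + 1 / (u+t)) by (field; lra).
  apply Rplus_le_compat; [apply Rle_trans with (1 * Ls (u+t))|apply Rle_trans with (1 * Lc (u+t))];
   try (apply Rmult_le_compat_r; lra); lra.
Qed.

Lemma Ps_bound t u : 0 <= t -> 0 < u -> Rabs (Ps t u) <= 2 / (u + t).
Proof.
  intros Ht Hu. unfold Ps. destruct (Ls_spec (u+t)) as [_ [H1 H2]]; [lra|].
  destruct (Lc_spec (u+t)) as [_ [H3 H4]]; [lra|].
  pose proof (SIN_bound u). pose proof (COS_bound u).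
  rewrite Rabs_Ropp. eapply Rle_trans. apply Rabs_triang. rewrite !Rabs_mult.
  rewrite (Rabs_pos_eq (Ls _)), (Rabs_pos_eq (Lc _)) by lra.
  assert (Rabs (sin u) <= 1) by (apply Rabs_le; lra).
  assert (Rabs (cos u) <= 1) by (apply Rabs_le; lra).
  replace (2 / (u + t)) with (1 / (u+t) + 1 / (u+t)) by (field; lra).
  apply Rplus_le_compat; [apply Rle_trans with (1 * Lc (u+t))|apply Rle_trans with (1 * Ls (u+t))];
   try (apply Rmult_le_compat_r; lra); lra.
Qed.

Lemma bound_shift (F : R -> R) t : 0 <= t -> (forall b, 0 < b -> Rabs (F b) <= 2 / (b + t)) ->
  forall b, 0 < b -> Rabs (F b) <= 2 / b.
Proof.
  intros Ht H b Hb. eapply Rle_trans. apply H; auto.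
  apply Rmult_le_compat_l. lra. apply Rinv_le_contravar; lra.
Qed.

Lemma E_re t : 0 < t -> HasInt (fun u => cos u / (u + t)) 0 (Lc t).
Proof.
  intros Ht. apply (HasInt_of_lim _ _ (fun b => Pc t b - Pc t 0)).
  - intros b Hb.
    assert (H := is_RInt_derive (V:=R_CompleteNormedModule) (Pc t) (fun u => cos u / (u + t)) 0 b).
    replace (Pc t b - Pc t 0) with (minus (Pc t b) (Pc t 0)) by (unfold minus, plus, opp; simpl; ring).
    apply H.
    + intros x Hx. rewrite Rmin_left, Rmax_right in Hx by lra. apply Pc_deriv. lra.
    + intros x Hx. rewrite Rmin_left, Rmax_right in Hx by lra. apply cont_of_deriv. auto_derive. lra.
  - apply (is_lim_pinfty_bound _ _ 0 2). intros b Hb.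
    replace (Pc t b - Pc t 0 - Lc t) with (Pc t b).
    + apply (bound_shift (Pc t) t); try lra. intros; apply Pc_bound; lra.
    + unfold Pc. rewrite sin_0, cos_0. replace (0 + t) with t by ring. ring.
Qed.

Lemma E_im t : 0 < t -> HasInt (fun u => sin u / (u + t)) 0 (Ls t).
Proof.
  intros Ht. apply (HasInt_of_lim _ _ (fun b => Ps t b - Ps t 0)).
  - intros b Hb.
    assert (H := is_RInt_derive (V:=R_CompleteNormedModule) (Ps t) (fun u => sin u / (u + t)) 0 b).
    replace (Ps t b - Ps t 0) with (minus (Ps t b) (Ps t 0)) by (unfold minus, plus, opp; simpl; ring).
    apply H.
    + intros x Hx. rewrite Rmin_left, Rmax_right in Hx by lra. apply Ps_deriv. lra.
    + intros x Hx. rewrite Rmin_left, Rmax_right in Hx by lra. apply cont_of_deriv. auto_derive. lra.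
  - apply (is_lim_pinfty_bound _ _ 0 2). intros b Hb.
    replace (Ps t b - Ps t 0 - Ls t) with (Ps t b).
    + apply (bound_shift (Ps t) t); try lra. intros; apply Ps_bound; lra.
    + unfold Ps. rewrite sin_0, cos_0. replace (0 + t) with t by ring. ring.
Qed.

Lemma E_val t : 0 < t -> E t = (Lc t, Ls t).
Proof.
  intros Ht. unfold E. f_equal; apply HasInt_unique. now apply E_re. now apply E_im.
Qed.

Lemma Cmod_E t : 0 < t -> Cmod (E t) = sqrt (Lc t ^ 2 + Ls t ^ 2).
Proof. intros Ht. rewrite E_val by auto. reflexivity. Qed.

Lemma S_tail t : 0 < t -> HasInt (fun u => sin u / u) t (sin t * Lc t + cos t * Ls t).
Proof.
  intros Ht. apply (HasInt_of_lim _ _ (fun b => Ps 0 b - Ps 0 t)).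
  - intros b Hb.
    assert (H := is_RInt_derive (V:=R_CompleteNormedModule) (Ps 0) (fun u => sin u / u) t b).
    replace (Ps 0 b - Ps 0 t) with (minus (Ps 0 b) (Ps 0 t)) by (unfold minus, plus, opp; simpl; ring).
    apply H.
    + intros x Hx. rewrite Rmin_left, Rmax_right in Hx by lra.
      replace (sin x / x) with (sin x / (x + 0)) by (now rewrite Rplus_0_r). apply Ps_deriv. lra.
    + intros x Hx. rewrite Rmin_left, Rmax_right in Hx by lra. apply cont_of_deriv. auto_derive. lra.
  - apply (is_lim_pinfty_bound _ _ t 2). intros b Hb.
    replace (Ps 0 b - Ps 0 t - (sin t * Lc t + cos t * Ls t)) with (Ps 0 b).
    + apply (bound_shift (Ps 0) 0); [lra| |lra]. intros; apply Ps_bound; lra.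
    + unfold Ps. rewrite !Rplus_0_r. ring.
Qed.

Lemma si_val t : 0 < t -> si t = - (sin t * Lc t + cos t * Ls t).
Proof. intros Ht. unfold si. f_equal. apply HasInt_unique. now apply S_tail. Qed.

Definition g3 (x : R) : R := 1 / sqrt (x^2 + 1).

Lemma sqrt1_pos x : 0 < sqrt (x^2 + 1).
Proof. apply sqrt_lt_R0. nra. Qed.

Lemma g3_cont x : continuous g3 x.
Proof. apply cont_of_deriv. unfold g3. auto_derive. side. Qed.

Lemma g3_bnd x : 0 <= x -> 0 <= g3 x <= 1.
Proof.
  intros Hx. unfold g3. pose proof (sqrt1_pos x).
  assert (1 <= sqrt (x^2+1)) by (apply Rle_trans with (sqrt 1); [rewrite sqrt_1; lra | apply sqrt_le_1_alt; nra]).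
  split. apply Rle_mult_inv_pos; lra.
  apply (Rmult_le_reg_r (sqrt (x^2+1))). lra. unfold Rdiv. rewrite Rmult_assoc, Rinv_l by lra. lra.
Qed.

Lemma M_spec t : 0 < t -> HasInt (fun u => exp (-(t*u)) / sqrt (u^2 + 1)) 0 (M t) /\ 0 <= M t <= 1 / t.
Proof.
  intros Ht. destruct (Lap_spec g3 1 t g3_cont g3_bnd Ht) as [H1 H2].
  assert (H3 : HasInt (fun u => exp (-(t*u)) / sqrt (u^2 + 1)) 0 (Lap g3 t)).
  { eapply HasInt_ext; [|exact H1]. intros x _. unfold g3. field. pose proof (sqrt1_pos x); lra. }
  assert (HM : M t = Lap g3 t) by (unfold M; now apply HasInt_unique).
  rewrite HM. auto.
Qed.

Lemma M_pos t : 0 < t -> 0 < M t.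
Proof.
  intros Ht. destruct (M_spec t Ht) as [H _].
  assert (Hc : forall x, continuous (fun u => exp (-(t*u)) / sqrt (u^2 + 1)) x).
  { intros x. apply cont_of_deriv. auto_derive. side. }
  assert (H0 : 0 < RInt (fun u => exp (-(t*u)) / sqrt (u^2 + 1)) 0 1).
  { apply RInt_gt_0. lra. intros x _. apply Rdiv_lt_0_compat. apply exp_pos. apply sqrt1_pos.
    intros; apply Hc. }
  apply Rlt_le_trans with (RInt (fun u => exp (-(t*u)) / sqrt (u^2 + 1)) 0 1); auto.
  eapply (HasInt_lb' _ 0 (M t) _ 1); [|exact H]. intros b Hb. apply RInt_mono_b; auto. lra.
  intros x _. apply Rlt_le, Rdiv_lt_0_compat. apply exp_pos. apply sqrt1_pos.
Qed.

Lemma alg_ineq r s p q : 0 < r -> 0 < s -> p^2 + q^2 = r^2 * s^2 -> q^2 / (2*r*s^3) <= r/s - p/s^2.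
Proof.
  intros Hr Hs Hpq.
  apply (Rmult_le_reg_r (2*r*s^3)). apply Rmult_lt_0_compat; [lra|]. apply pow_lt; lra.
  replace (q^2 / (2*r*s^3) * (2*r*s^3)) with (q^2) by (field; lra).
  replace ((r/s - p/s^2) * (2*r*s^3)) with (2*r^2*s^2 - 2*r*p*s) by (field; lra).
  nra.
Qed.

Lemma poly2_RInt a b : is_RInt (fun u => (b*u - a)^2) 0 1 (b^2/3 - a*b + a^2).
Proof.
  assert (H := is_RInt_derive (V:=R_CompleteNormedModule) (fun u => b^2*u^3/3 - a*b*u^2 + a^2*u) (fun u => (b*u - a)^2) 0 1).
  replace (b^2/3 - a*b + a^2) with (minus ((fun u => b^2*u^3/3 - a*b*u^2 + a^2*u) 1) ((fun u => b^2*u^3/3 - a*b*u^2 + a^2*u) 0))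
    by (unfold minus, plus, opp; simpl; field).
  apply H.
  - intros x _. auto_derive. auto. field.
  - intros x _. apply cont_of_deriv. auto_derive. auto.
Qed.

Theorem part_a t : 0 < t -> Cmod (E t) < M t.
Proof.
  intros Ht. rewrite Cmod_E by auto.
  set (a := Lc t). set (b := Ls t). set (r := sqrt (a^2 + b^2)).
  assert (Hr0 : 0 <= r) by apply sqrt_pos.
  destruct (Req_dec r 0) as [Hr|Hr]. { rewrite Hr. now apply M_pos. }
  assert (Hrp : 0 < r) by lra.
  assert (Hrr : r^2 = a^2 + b^2) by (unfold r; rewrite pow2_sqrt; nra).
  destruct (M_spec t Ht) as [HM _]. destruct (Lc_spec t Ht) as [HLc _]. destruct (Ls_spec t Ht) as [HLs _].
  set (fk := fun u => r * (exp (-(t*u)) / sqrt (u^2 + 1)) - (a * (exp (-(t*u)) * g2 u) + b * (exp (-(t*u)) * g1 u))).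
  assert (Hk : HasInt fk 0 (r * M t - (a * a + b * b))).
  { apply HasInt_minus. now apply HasInt_scal. apply HasInt_plus; now apply HasInt_scal. }
  assert (Hpt : forall u, 0 <= u -> exp (-(t*u)) * ((b*u - a)^2 / (2*r*(sqrt (u^2+1))^3)) <= fk u).
  { intros u Hu. unfold fk, g1, g2. set (s := sqrt (u^2+1)).
    assert (Hs : 0 < s) by apply sqrt1_pos. assert (Hs2 : s^2 = u^2 + 1) by (unfold s; rewrite pow2_sqrt; nra).
    replace (r * (exp (-(t*u)) / s) - (a * (exp (-(t*u)) * (u / (1 + u^2))) + b * (exp (-(t*u)) * (1 / (1 + u^2)))))
      with (exp (-(t*u)) * (r / s - (a*u + b) / s^2)).
    2:{ rewrite Hs2. field. split; nra. }
    apply Rmult_le_compat_l. apply Rlt_le, exp_pos.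
    apply alg_ineq; auto. rewrite Hrr, Hs2. ring. }
  set (c := exp (-t) / (6 * r)).
  assert (Hc : 0 < c) by (apply Rdiv_lt_0_compat; [apply exp_pos|lra]).
  assert (Hpt2 : forall u, 0 <= u <= 1 -> c * (b*u - a)^2 <= fk u).
  { intros u Hu. eapply Rle_trans; [|apply Hpt; lra].
    set (s := sqrt (u^2+1)).
    assert (Hs : 0 < s) by apply sqrt1_pos. assert (Hs2 : s^2 = u^2 + 1) by (unfold s; rewrite pow2_sqrt; nra).
    assert (s^2 <= 2) by nra. assert (s <= 3/2) by nra. assert (Hs3 : s^3 <= 3) by (replace (s^3) with (s^2 * s) by ring; nra).
    assert (He : exp (-t) <= exp (-(t*u))) by (apply exp_le_mono; nra).
    unfold c. pose proof (exp_pos (-t)).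
    assert (Hq : 0 <= (b*u - a)^2) by apply pow2_ge_0.
    replace (exp (-t) / (6*r) * (b*u - a)^2) with (exp (-t) * ((b*u - a)^2 / (6*r))) by (field; lra).
    apply Rmult_le_compat; try lra. apply Rle_mult_inv_pos; lra.
    apply Rmult_le_compat_l; auto. apply Rinv_le_contravar. apply Rmult_lt_0_compat; [lra|apply pow_lt; lra].
    nra. }
  assert (Hfkc : forall x, continuous fk x).
  { intros x. apply cont_of_deriv. unfold fk, g1, g2. auto_derive. side. }
  assert (Hfk0 : forall u, 0 <= u -> 0 <= fk u).
  { intros u Hu. eapply Rle_trans; [|apply Hpt; auto]. apply Rmult_le_pos. apply Rlt_le, exp_pos.
    apply Rle_mult_inv_pos. apply pow2_ge_0. apply Rmult_lt_0_compat; [lra|]. apply pow_lt, sqrt1_pos. }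
  assert (Hlow : c * (b^2/3 - a*b + a^2) <= r * M t - (a * a + b * b)).
  { eapply (HasInt_lb' _ 0 _ _ 1); [|exact Hk]. intros b' Hb'.
    apply Rle_trans with (RInt fk 0 1).
    - rewrite <- (is_RInt_unique _ _ _ _ (poly2_RInt a b)).
      rewrite <- RInt_scalR by (eexists; apply poly2_RInt).
      apply RInt_le. lra. apply ex_RInt_scalR. eexists; apply poly2_RInt. apply ex_RInt_cont; auto.
      intros; apply Hpt2; lra.
    - apply RInt_mono_b; auto. lra. intros; apply Hfk0; lra. }
  assert (0 < b^2/3 - a*b + a^2).
  { assert (0 < a^2 + b^2) by (rewrite <- Hrr; apply pow_lt; lra).
    assert (E1 : 12*(b^2/3 - a*b + a^2) - (a^2+b^2)/2 = 23/2 * (a - 12/23*b)^2 + (7/2 - 144/46)*b^2) by field.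
    assert (0 <= (a - 12/23*b)^2) by apply pow2_ge_0. assert (0 <= b^2) by apply pow2_ge_0. lra. }
  assert (0 < c * (b^2/3 - a*b + a^2)) by (apply Rmult_lt_0_compat; auto).
  assert (r * r < r * M t) by nra.
  apply (Rmult_lt_reg_l r); auto.
Qed.

Definition fM (t u : R) : R := exp (-(t*u)) / sqrt (u^2 + 1).

Lemma fM_cont t x : continuous (fM t) x.
Proof. apply cont_of_deriv. unfold fM. auto_derive. side. Qed.

Lemma fM_pos t u : 0 < fM t u.
Proof. unfold fM. apply Rdiv_lt_0_compat. apply exp_pos. apply sqrt1_pos. Qed.

(* convexity of 1/sqrt(1+w) in w : chord bound *)
Lemma chord_ineq a b u p q : 0 <= a -> a <= u <= b -> a < b -> 0 <= p -> 0 <= q ->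
  1 <= p^2 * (1 + a^2) -> 1 <= q^2 * (1 + b^2) ->
  1 / sqrt (u^2 + 1) <= p + (u^2 - a^2) * (q - p) / (b^2 - a^2).
Proof.
  intros Ha Hu Hab Hp Hq Hpa Hqb.
  set (sa := sqrt (a^2 + 1)). set (sb := sqrt (b^2 + 1)). set (s := sqrt (u^2 + 1)).
  assert (Hsa : 0 < sa) by apply sqrt1_pos. assert (Hsb : 0 < sb) by apply sqrt1_pos.
  assert (Hs : 0 < s) by apply sqrt1_pos.
  assert (Esa : sa^2 = a^2 + 1) by (unfold sa; rewrite pow2_sqrt; nra).
  assert (Esb : sb^2 = b^2 + 1) by (unfold sb; rewrite pow2_sqrt; nra).
  assert (Es : s^2 = u^2 + 1) by (unfold s; rewrite pow2_sqrt; nra).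
  assert (Hsas : sa <= s) by (apply sqrt_le_1_alt; nra).
  assert (Hssb : s <= sb) by (apply sqrt_le_1_alt; nra).
  assert (Hd : 0 < sb - sa) by (cut (sa < sb); [lra|apply sqrt_lt_1_alt; nra]).
  clearbody sa sb s.
  assert (Hp1 : 1 / sa <= p).
  { apply (Rmult_le_reg_r sa); auto. unfold Rdiv. rewrite Rmult_assoc, Rinv_l, Rmult_1_r by lra.
    apply sq_ge1. nra. replace ((p*sa)^2) with (p^2 * sa^2) by ring; rewrite Esa; lra. }
  assert (Hq1 : 1 / sb <= q).
  { apply (Rmult_le_reg_r sb); auto. unfold Rdiv. rewrite Rmult_assoc, Rinv_l, Rmult_1_r by lra.
    apply sq_ge1. nra. replace ((q*sb)^2) with (q^2 * sb^2) by ring; rewrite Esb; lra. }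
  pose (lam := (u^2 - a^2) / (b^2 - a^2)).
  assert (Hl0 : 0 <= lam) by (apply Rle_mult_inv_pos; nra).
  assert (Hl1 : lam <= 1). { unfold lam. apply (Rmult_le_reg_r (b^2 - a^2)). nra. field_simplify; nra. }
  replace (p + (u^2 - a^2) * (q - p) / (b^2 - a^2)) with ((1 - lam) * p + lam * q) by (unfold lam; field; nra).
  apply Rle_trans with ((1 - lam) * (1/sa) + lam * (1/sb)).
  2:{ apply Rplus_le_compat; apply Rmult_le_compat_l; lra. }
  assert (Elam : lam * (sb^2 - sa^2) = s^2 - sa^2) by (unfold lam; rewrite Esa, Esb, Es; field; nra).
  assert (Elam' : lam = (s^2 - sa^2) / (sb^2 - sa^2)) by (rewrite <- Elam; field; nra).
  rewrite Elam'.
  assert (Hid : (1 - (s^2 - sa^2) / (sb^2 - sa^2)) * (1 / sa) + (s^2 - sa^2) / (sb^2 - sa^2) * (1 / sb) - 1 / s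
    = (s - sa) * (sb - s) * (s + sa + sb) / (s * sa * sb * (sb + sa))).
  { field. repeat split; try lra. nra. }
  assert (0 <= (s - sa) * (sb - s) * (s + sa + sb) / (s * sa * sb * (sb + sa))).
  { apply Rle_mult_inv_pos. apply Rmult_le_pos; [apply Rmult_le_pos|]; lra.
    repeat apply Rmult_lt_0_compat; lra. }
  lra.
Qed.

Definition Gf (t al be u : R) : R := (al + be*u^2)/t + be*(2*u/t^2 + 2/t^3).
Definition bet (t v v' p q : R) : R := (q - p)/((v'/t)^2 - (v/t)^2).
Definition alp (t v v' p q : R) : R := p - bet t v v' p q * (v/t)^2.
Definition pval (t v v' p q : R) : R :=
  Gf t (alp t v v' p q) (bet t v v' p q) (v/t) * exp (-v) - Gf t (alp t v v' p q) (bet t v v' p q) (v'/t) * exp (-v').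

Lemma poly_exp_RInt t al be a b : 0 < t ->
  is_RInt (fun u => exp (-(t*u)) * (al + be*u^2)) a b (Gf t al be a * exp (-(t*a)) - Gf t al be b * exp (-(t*b))).
Proof.
  intros Ht.
  assert (H := is_RInt_derive (V:=R_CompleteNormedModule) (fun u => - exp (-(t*u)) * Gf t al be u) (fun u => exp (-(t*u)) * (al + be*u^2)) a b).
  replace (Gf t al be a * exp (-(t*a)) - Gf t al be b * exp (-(t*b))) with
    (minus (- exp (-(t*b)) * Gf t al be b) (- exp (-(t*a)) * Gf t al be a)) by (unfold minus, plus, opp; simpl; ring).
  apply H.
  - intros x _. unfold Gf. auto_derive. auto. field. lra.
  - intros x _. apply cont_of_deriv. auto_derive. auto.
Qed.

Lemma piece t v v' p q : 0 < t -> 0 <= v < v' -> 0 <= p -> 0 <= q ->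
  1 <= p^2 * (1 + (v/t)^2) -> 1 <= q^2 * (1 + (v'/t)^2) ->
  RInt (fM t) (v/t) (v'/t) <= pval t v v' p q.
Proof.
  intros Ht Hv Hp Hq Hpa Hqb.
  set (a := v/t). set (b := v'/t).
  assert (Ha : 0 <= a) by (unfold a; apply Rle_mult_inv_pos; lra).
  assert (Hab : a < b) by (unfold a, b; unfold Rdiv; apply Rmult_lt_compat_r; [apply Rinv_0_lt_compat|]; lra).
  set (be := bet t v v' p q). set (al := alp t v v' p q).
  assert (Hchord : forall u, a <= u <= b -> fM t u <= exp (-(t*u)) * (al + be*u^2)).
  { intros u Hu. unfold fM.
    replace (exp (-(t*u)) / sqrt (u^2+1)) with (exp (-(t*u)) * (1 / sqrt (u^2+1))) by (field; apply Rgt_not_eq, sqrt1_pos).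
    apply Rmult_le_compat_l. apply Rlt_le, exp_pos.
    replace (al + be * u^2) with (p + (u^2 - a^2) * (q - p) / (b^2 - a^2)).
    apply chord_ineq; auto; lra.
    unfold al, be, alp, bet. fold a b. field. nra. }
  assert (Hi := poly_exp_RInt t al be a b Ht).
  replace (pval t v v' p q) with (Gf t al be a * exp (-(t*a)) - Gf t al be b * exp (-(t*b))).
  2:{ unfold pval. fold be al a b. unfold a, b. replace (t * (v/t)) with v by (field; lra).
      replace (t * (v'/t)) with v' by (field; lra). reflexivity. }
  rewrite <- (is_RInt_unique _ _ _ _ Hi).
  apply RInt_le. lra. apply ex_RInt_cont. apply fM_cont. eexists; exact Hi.
  intros u Hu. apply Hchord; lra.
Qed.

Fixpoint chain_ok (t v p : R) (l : list (R*R)) : Prop :=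
  match l with
  | nil => True
  | (v', q) :: l' => v < v' /\ 0 <= q /\ 1 <= q^2 * (1 + (v'/t)^2) /\ chain_ok t v' q l'
  end.
Fixpoint chain_val (t v p : R) (l : list (R*R)) : R :=
  match l with
  | nil => 0
  | (v', q) :: l' => pval t v v' p q + chain_val t v' q l'
  end.
Fixpoint chain_end (v : R) (l : list (R*R)) : R :=
  match l with
  | nil => v
  | (v', _) :: l' => chain_end v' l'
  end.

Lemma chain_end_ge v l : forall t p, chain_ok t v p l -> v <= chain_end v l.
Proof.
  revert v. induction l as [|[v' q] l IH]; intros v t p H; simpl in *. lra.
  destruct H as [H1 [H2 [H3 H4]]]. specialize (IH v' t q H4). lra.
Qed.

Lemma chain_bound t l : forall v p, 0 < t -> 0 <= v -> 0 <= p -> 1 <= p^2 * (1 + (v/t)^2) -> chain_ok t v p l ->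
  RInt (fM t) (v/t) (chain_end v l / t) <= chain_val t v p l.
Proof.
  induction l as [|[v' q] l IH]; intros v p Ht Hv Hp Hpa H; simpl in *.
  - rewrite RInt_point. apply Rle_refl.
  - destruct H as [H1 [H2 [H3 H4]]].
    rewrite <- (RInt_Chasles (fM t) (v/t) (v'/t)) by (apply ex_RInt_cont, fM_cont).
    change (plus ?x ?y) with (x + y).
    apply Rplus_le_compat. apply piece; auto; lra.
    apply IH; auto; lra.
Qed.

Lemma tail_bound t K b : 0 < t -> 0 < K -> K <= b -> RInt (fM t) K b <= exp (-(t*K)) / (t*K).
Proof.
  intros Ht HK Hb.
  apply Rle_trans with (RInt (fun u => / K * exp (-(t*u))) K b).
  - apply RInt_le; auto. apply ex_RInt_cont, fM_cont. apply ex_RInt_scalR. eexists; apply exp_RInt; lra.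
    intros u Hu. unfold fM. unfold Rdiv. rewrite Rmult_comm. apply Rmult_le_compat_r. apply Rlt_le, exp_pos.
    apply Rinv_le_contravar. lra.
    apply Rle_trans with (sqrt (u^2)). rewrite sqrt_pow2; lra. apply sqrt_le_1_alt; lra.
  - rewrite RInt_scalR by (eexists; apply exp_RInt; lra).
    rewrite (is_RInt_unique _ _ _ _ (exp_RInt t K b ltac:(lra))).
    pose proof (exp_pos (-(t*b))).
    replace (exp (-(t*K)) / (t*K)) with (/ K * (exp (-(t*K)) / t)) by (field; lra).
    apply Rmult_le_compat_l. left; apply Rinv_0_lt_compat; lra.
    unfold Rdiv. apply Rmult_le_compat_r. left; now apply Rinv_0_lt_compat. lra.
Qed.

Lemma M_ub t l vK U : 0 < t -> chain_ok t 0 1 l -> chain_end 0 l = vK -> 0 < vK ->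
  chain_val t 0 1 l + exp (-vK) / vK <= U -> M t <= U.
Proof.
  intros Ht Hok Hend HvK HU.
  destruct (M_spec t Ht) as [HM _].
  set (K := vK / t).
  assert (HK : 0 < K) by (unfold K; apply Rdiv_lt_0_compat; lra).
  assert (Hc := chain_bound t l 0 1 Ht ltac:(lra) ltac:(lra) ltac:(unfold Rdiv; rewrite Rmult_0_l; lra) Hok).
  rewrite Hend in Hc. replace (0/t) with 0 in Hc by (field; lra). fold K in Hc.
  eapply (HasInt_ub (fM t) 0 (M t) U); [|exact HM].
  intros b Hb.
  apply Rle_trans with (RInt (fM t) 0 (Rmax b K)).
  { apply RInt_mono_b. split. lra. apply Rmax_l. apply fM_cont. intros; left; apply fM_pos. }
  rewrite <- (RInt_Chasles (fM t) 0 K) by (apply ex_RInt_cont, fM_cont).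
  change (plus ?x ?y) with (x + y).
  assert (Ht2 := tail_bound t K (Rmax b K) Ht HK (Rmax_r b K)).
  replace (t * K) with vK in Ht2 by (unfold K; field; lra).
  lra.
Qed.

Lemma exp_convex x y l : 0 <= l <= 1 -> exp (l*x + (1-l)*y) <= l * exp x + (1-l) * exp y.
Proof.
  intros Hl. set (m := l*x + (1-l)*y).
  assert (E1 : exp x = exp m * exp (x - m)) by (rewrite <- exp_plus; f_equal; ring).
  assert (E2 : exp y = exp m * exp (y - m)) by (rewrite <- exp_plus; f_equal; ring).
  pose proof (exp_ineq1_le (x - m)). pose proof (exp_ineq1_le (y - m)). pose proof (exp_pos m).
  rewrite E1, E2.
  assert (l * (exp m * exp (x - m)) + (1 - l) * (exp m * exp (y - m)) >=
          l * (exp m * (1 + (x - m))) + (1 - l) * (exp m * (1 + (y - m)))).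
  { apply Rle_ge, Rplus_le_compat; apply Rmult_le_compat_l; try lra; apply Rmult_le_compat_l; lra. }
  assert (l * (exp m * (1 + (x - m))) + (1 - l) * (exp m * (1 + (y - m))) = exp m) by (unfold m; ring).
  lra.
Qed.

Lemma M_convex t1 t2 t : 0 < t1 -> t1 < t2 -> t1 <= t <= t2 ->
  M t <= (t2 - t)/(t2 - t1) * M t1 + (1 - (t2 - t)/(t2 - t1)) * M t2.
Proof.
  intros H1 H12 Ht. set (l := (t2 - t)/(t2 - t1)).
  assert (Hl : 0 <= l <= 1).
  { unfold l. split. apply Rle_mult_inv_pos; lra. apply (Rmult_le_reg_r (t2 - t1)). lra. field_simplify; lra. }
  assert (Htl : t = l * t1 + (1 - l) * t2) by (unfold l; field; lra).
  clearbody l.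
  destruct (M_spec t ltac:(lra)) as [HM _]. destruct (M_spec t1 ltac:(lra)) as [HM1 _].
  destruct (M_spec t2 ltac:(lra)) as [HM2 _].
  eapply (HasInt_le _ _ 0); [|exact HM|apply HasInt_plus; apply HasInt_scal; [exact HM1|exact HM2]].
  intros u Hu. cbv beta.
  replace (exp (-(t*u)) / sqrt (u^2+1)) with (exp (l * (-(t1*u)) + (1-l) * (-(t2*u))) * (1 / sqrt (u^2+1))).
  2:{ rewrite Htl. unfold Rdiv. f_equal. f_equal. ring. ring. }
  pose proof (sqrt1_pos u).
  assert (0 < 1 / sqrt (u^2+1)) by (apply Rdiv_lt_0_compat; lra).
  eapply Rle_trans. apply Rmult_le_compat_r. lra. apply exp_convex; auto.
  apply Req_le. unfold Rdiv. ring.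
Qed.

Lemma atan_deriv x : is_derive atan x (/ (1 + x^2)).
Proof. apply is_derive_Reals. apply derivable_pt_lim_atan. Qed.

Lemma atan_cont x : continuity_pt atan x.
Proof. apply derivable_continuous_pt. exists (/ (1 + x^2)). apply derivable_pt_lim_atan. Qed.

Lemma arccot_tangent m t : 0 < m -> 0 < t -> arccot m - (t - m) / (1 + m^2) <= arccot t.
Proof.
  intros Hm Ht. unfold arccot.
  set (h := fun x => atan x - x / (1 + m^2)).
  assert (Hd : forall x, is_derive h x (/ (1 + x^2) - 1 / (1 + m^2))).
  { intros x. unfold h. apply (is_derive_minus atan (fun x => x / (1 + m^2))). apply atan_deriv.
    auto_derive. nra. field. nra. }
  assert (Hc : forall x, continuity_pt h x).
  { intros x. apply continuity_pt_minus. apply atan_cont. apply derivable_continuous_pt.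
    apply derivable_pt_div. apply derivable_pt_id. apply derivable_pt_const. nra. }
  destruct (MVT_gen h m t (fun x => / (1 + x^2) - 1 / (1 + m^2))) as [c [Hc1 Hc2]].
  { intros x _. apply Hd. } { intros x _. apply Hc. }
  unfold h in Hc2.
  destruct (Rle_lt_dec m t) as [Hmt|Hmt].
  - rewrite Rmin_left, Rmax_right in Hc1 by lra.
    assert (/ (1 + c^2) - 1 / (1 + m^2) <= 0).
    { assert (m^2 <= c^2) by nra. unfold Rdiv. rewrite Rmult_1_l.
      assert (/ (1 + c^2) <= / (1 + m^2)) by (apply Rinv_le_contravar; nra). lra. }
    assert ((/ (1 + c^2) - 1 / (1 + m^2)) * (t - m) <= 0) by (apply Rmult_le_0_r; lra).
    assert (t / (1 + m^2) - m / (1 + m^2) = (t - m) / (1 + m^2)) by (field; nra).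
    lra.
  - rewrite Rmin_right, Rmax_left in Hc1 by lra.
    assert (/ (1 + c^2) - 1 / (1 + m^2) >= 0).
    { assert (c^2 <= m^2) by nra. unfold Rdiv. rewrite Rmult_1_l.
      assert (/ (1 + m^2) <= / (1 + c^2)) by (apply Rinv_le_contravar; nra). lra. }
    assert ((/ (1 + c^2) - 1 / (1 + m^2)) * (t - m) <= 0) by (apply Rmult_le_0_l; lra).
    assert (t / (1 + m^2) - m / (1 + m^2) = (t - m) / (1 + m^2)) by (field; nra).
    lra.
Qed.

Lemma deriv_contpt (f : R -> R) df x : is_derive f x df -> continuity_pt f x.
Proof. intros H. apply derivable_continuous_pt. exists df. now apply is_derive_Reals. Qed.

Lemma mono_from_deriv (h dh : R -> R) y : 0 <= y -> (forall x, is_derive h x (dh x)) ->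
  (forall x, 0 <= x -> 0 <= dh x) -> h 0 <= h y.
Proof.
  intros Hy Hd Hpos.
  destruct (MVT_gen h 0 y dh) as [c [Hc1 Hc2]].
  { intros x _. apply Hd. } { intros x _. eapply deriv_contpt, Hd. }
  rewrite Rmin_left, Rmax_right in Hc1 by lra.
  assert (0 <= dh c * (y - 0)) by (apply Rmult_le_pos; [apply Hpos; lra|lra]). lra.
Qed.

Lemma atan_lb_P7 y : 0 <= y -> y - y^3/3 + y^5/5 - y^7/7 <= atan y.
Proof.
  intros Hy.
  cut (atan 0 - (0 - 0^3/3 + 0^5/5 - 0^7/7) <= atan y - (y - y^3/3 + y^5/5 - y^7/7)). rewrite atan_0. lra.
  apply (mono_from_deriv (fun x => atan x - (x - x^3/3 + x^5/5 - x^7/7)) (fun x => x^8 / (1 + x^2))); auto.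
  - intros x. replace (x^8 / (1 + x^2)) with (/ (1 + x^2) - (1 - x^2 + x^4 - x^6)) by (field; nra).
    apply (is_derive_minus atan). apply atan_deriv. auto_derive. auto. field.
  - intros x Hx. apply Rle_mult_inv_pos. apply pow_le; lra. nra.
Qed.

Lemma atan_lb_P15 y : 0 <= y ->
  y - y^3/3 + y^5/5 - y^7/7 + y^9/9 - y^11/11 + y^13/13 - y^15/15 <= atan y.
Proof.
  intros Hy.
  cut (atan 0 - (0 - 0^3/3 + 0^5/5 - 0^7/7 + 0^9/9 - 0^11/11 + 0^13/13 - 0^15/15) <=
       atan y - (y - y^3/3 + y^5/5 - y^7/7 + y^9/9 - y^11/11 + y^13/13 - y^15/15)). rewrite atan_0. lra.
  apply (mono_from_deriv (fun x => atan x - (x - x^3/3 + x^5/5 - x^7/7 + x^9/9 - x^11/11 + x^13/13 - x^15/15))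
     (fun x => x^16 / (1 + x^2))); auto.
  - intros x. replace (x^16 / (1 + x^2)) with (/ (1 + x^2) - (1 - x^2 + x^4 - x^6 + x^8 - x^10 + x^12 - x^14)) by (field; nra).
    apply (is_derive_minus atan). apply atan_deriv. auto_derive. auto. field.
  - intros x Hx. apply Rle_mult_inv_pos. apply pow_le; lra. nra.
Qed.

Lemma atan_ub_P5 y : 0 <= y -> atan y <= y - y^3/3 + y^5/5.
Proof.
  intros Hy.
  cut ((0 - 0^3/3 + 0^5/5) - atan 0 <= (y - y^3/3 + y^5/5) - atan y). rewrite atan_0. lra.
  apply (mono_from_deriv (fun x => (x - x^3/3 + x^5/5) - atan x) (fun x => x^6 / (1 + x^2))); auto.
  - intros x. replace (x^6 / (1 + x^2)) with ((1 - x^2 + x^4) - / (1 + x^2)) by (field; nra).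
    apply (is_derive_minus _ atan). auto_derive. auto. field. apply atan_deriv.
  - intros x Hx. apply Rle_mult_inv_pos. apply pow_le; lra. nra.
Qed.

Lemma arccot_inv t : 0 < t -> arccot t = atan (/ t).
Proof. intros Ht. unfold arccot. now rewrite atan_inv. Qed.

Lemma PI_gt : 314/100 < PI.
Proof.
  assert (H := pre_cos_bound (785/1000) 1 ltac:(lra) ltac:(lra)).
  destruct H as [H _]. unfold cos_approx, cos_term in H. simpl in H.
  assert (Hc : cos (2 * (785/1000)) = 2 * cos (785/1000) * cos (785/1000) - 1) by apply cos_2a_cos.
  assert (0 < cos (2 * (785/1000))) by (rewrite Hc; nra).
  assert (2 * (785/1000) < PI/2) by (apply PI2_lower_bound; [lra|auto]).
  lra.
Qed.

Definition pA (u : R) : R := 1 - u^2/2 + 3*u^4/8.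
Definition QA (t u : R) : R :=
  pA u / t + (- u + 3*u^3/2) / t^2 + (-1 + 9*u^2/2) / t^3 + 9*u / t^4 + 9 / t^5.

Lemma pA_bound u : 1 / sqrt (u^2 + 1) <= pA u.
Proof.
  pose proof (sqrt1_pos u) as Hs. assert (Es : sqrt (u^2+1)^2 = u^2 + 1) by (rewrite pow2_sqrt; nra).
  assert (Hp : 0 < pA u) by (unfold pA; nra).
  assert (H1 : 1 <= pA u * sqrt (u^2+1)).
  { apply sq_ge1. apply Rmult_le_pos; lra.
    replace ((pA u * sqrt (u^2+1))^2) with (pA u ^2 * sqrt (u^2+1)^2) by ring. rewrite Es.
    unfold pA. assert (0 <= u^6 * (40 - 15*u^2 + 9*u^4) / 64).
    { apply Rmult_le_pos; [|lra]. apply Rmult_le_pos. replace (u^6) with ((u^3)^2) by ring. apply pow2_ge_0. nra. }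
    nra. }
  apply (Rmult_le_reg_r (sqrt (u^2+1))); auto. unfold Rdiv. rewrite Rmult_assoc, Rinv_l by lra. lra.
Qed.

Lemma QA_pos t u : 4 <= t -> 0 <= u -> 0 <= QA t u.
Proof.
  intros Ht Hu. unfold QA, pA.
  assert (Ht0 : 0 < t) by lra.
  replace (( 1 - u^2/2 + 3*u^4/8) / t + (- u + 3*u^3/2) / t^2 + (-1 + 9*u^2/2) / t^3 + 9*u / t^4 + 9 / t^5)
    with ((t^4 * (1 - u^2/2 + 3*u^4/8) + t^3 * (- u + 3*u^3/2) + t^2 * (-1 + 9*u^2/2) + t * (9*u) + 9) / t^5)
    by (field; lra).
  apply Rle_mult_inv_pos; [|apply pow_lt; lra].
  assert (A1' : 0 <= t^3 * u * (t - 4)) by (repeat apply Rmult_le_pos; try apply pow_le; lra).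
  assert (A1 : t^3 * u <= t^4 * u / 4) by lra.
  assert (A2' : 0 <= t^2 * (t^2 - 16)) by (apply Rmult_le_pos; [apply pow_le; lra| nra]).
  assert (A2 : t^2 <= t^4 / 16) by lra.
  assert (A3 : 0 <= t^4 * (15/16 - u/4 - u^2/2 + 3*u^4/8)).
  { apply Rmult_le_pos. apply pow_le; lra.
    assert (0 <= (u^2 - 1)^2) by apply pow2_ge_0. assert (0 <= (u - 1/2)^2) by apply pow2_ge_0.
    assert (15/16 - u/4 - u^2/2 + 3*u^4/8 = 3/8*(u^2-1)^2 + 1/4*(u - 1/2)^2 + 1/2) by field. lra. }
  assert (0 <= t^3 * (3*u^3/2)) by (apply Rmult_le_pos; [apply pow_le|]; nra).
  assert (0 <= t^2 * (9*u^2/2)) by (apply Rmult_le_pos; [apply pow_le|]; nra).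
  assert (0 <= t * (9*u)) by nra.
  nra.
Qed.

Lemma pA_RInt t b : 0 < t ->
  is_RInt (fun u => exp (-(t*u)) * pA u) 0 b (QA t 0 * exp (-(t*0)) - QA t b * exp (-(t*b))).
Proof.
  intros Ht.
  assert (H := is_RInt_derive (V:=R_CompleteNormedModule) (fun u => - exp (-(t*u)) * QA t u) (fun u => exp (-(t*u)) * pA u) 0 b).
  replace (QA t 0 * exp (-(t*0)) - QA t b * exp (-(t*b))) with
    (minus (- exp (-(t*b)) * QA t b) (- exp (-(t*0)) * QA t 0)) by (unfold minus, plus, opp; simpl; ring).
  apply H.
  - intros x _. unfold QA, pA. auto_derive. auto. field. lra.
  - intros x _. apply cont_of_deriv. unfold pA. auto_derive. auto.
Qed.

Lemma M_asym t : 4 <= t -> M t <= 1/t - 1/t^3 + 9/t^5.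
Proof.
  intros Ht. destruct (M_spec t ltac:(lra)) as [HM _].
  eapply (HasInt_ub (fM t) 0 (M t)); [|exact HM].
  intros b Hb.
  assert (Hi := pA_RInt t b ltac:(lra)).
  apply Rle_trans with (RInt (fun u => exp (-(t*u)) * pA u) 0 b).
  - apply RInt_le. lra. apply ex_RInt_cont, fM_cont. eexists; exact Hi.
    intros u Hu. unfold fM.
    replace (exp (-(t*u)) / sqrt (u^2+1)) with (exp (-(t*u)) * (1 / sqrt (u^2+1))) by (field; apply Rgt_not_eq, sqrt1_pos).
    apply Rmult_le_compat_l. apply Rlt_le, exp_pos. apply pA_bound.
  - rewrite (is_RInt_unique _ _ _ _ Hi).
    assert (0 <= QA t b * exp (-(t*b))) by (apply Rmult_le_pos; [apply QA_pos; lra|apply Rlt_le, exp_pos]).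
    replace (-(t*0)) with 0 by ring. rewrite exp_0.
    replace (QA t 0) with (1/t - 1/t^3 + 9/t^5) by (unfold QA, pA; field; lra). lra.
Qed.

Lemma asym_ineq t : 4 <= t -> 1/t - 1/t^3 + 9/t^5 < /t - (/t)^3/3 + (/t)^5/5 - (/t)^7/7.
Proof.
  intros Ht. set (y := / t).
  assert (Hy : 0 < y <= 1/4). { unfold y. split. apply Rinv_0_lt_compat; lra.
    replace (1/4) with (/4) by field. apply Rinv_le_contravar; lra. }
  replace (1/t - 1/t^3 + 9/t^5) with (y - y^3 + 9*y^5) by (unfold y; field; lra).
  clearbody y.
  assert (0 < y^3) by (apply pow_lt; lra).
  assert (y^2 <= 1/16) by nra.
  assert (y^4 <= 1/256) by nra.
  assert (44/5*y^2 + y^4/7 < 2/3) by lra.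
  replace (y - y^3/3 + y^5/5 - y^7/7 - (y - y^3 + 9*y^5)) with (y^3 * (2/3 - 44/5*y^2 - y^4/7)) by field.
  assert (0 < y^3 * (2/3 - 44/5*y^2 - y^4/7)) by (apply Rmult_lt_0_compat; lra).
  lra.
Qed.

Theorem M_lt_arccot_large t : 4 <= t -> M t < arccot t.
Proof.
  intros Ht. rewrite arccot_inv by lra.
  pose proof (M_asym t Ht). pose proof (asym_ineq t Ht).
  assert (0 <= / t) by (left; apply Rinv_0_lt_compat; lra).
  pose proof (atan_lb_P7 (/t) H1). lra.
Qed.

Lemma E1_growing x : 0 <= x -> Un_growing (E1 x).
Proof.
  intros Hx n. unfold E1. simpl. match goal with |- _ <= _ + ?t => assert (0 <= t); [|lra] end.
  apply Rmult_le_pos. left; apply Rinv_0_lt_compat. apply lt_0_INR. pose proof (Factorial.lt_O_fact n). lia. apply Rmult_le_pos; [lra| apply pow_le; lra].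
Qed.

Lemma exp_taylor6 x : 0 <= x -> 1 + x + x^2/2 + x^3/6 + x^4/24 + x^5/120 + x^6/720 <= exp x.
Proof.
  intros Hx. assert (H := growing_ineq (E1 x) (exp x) (E1_growing x Hx) (E1_cvg x) 6).
  unfold E1 in H. simpl in H. lra.
Qed.

Definition qh : R := 7788008 / 10000000.

Lemma exp_quarter : exp (-(1/4)) <= qh.
Proof.
  assert (H := exp_taylor6 (1/4) ltac:(lra)).
  rewrite exp_Ropp. unfold qh.
  apply (Rmult_le_reg_r (exp (1/4))). apply exp_pos. rewrite Rinv_l by (apply Rgt_not_eq, exp_pos). lra.
Qed.

Lemma exp_nat k x : exp (INR k * x) = exp x ^ k.
Proof.
  induction k. simpl. rewrite Rmult_0_l. apply exp_0.
  rewrite S_INR, Rmult_plus_distr_r, Rmult_1_l, exp_plus, IHk. simpl. ring.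
Qed.

Lemma exp_q4 k E : qh^k <= E -> exp (INR k * (-(1/4))) <= E.
Proof.
  intros H. rewrite exp_nat. eapply Rle_trans; [|exact H]. apply pow_incr. split.
  left; apply exp_pos. apply exp_quarter.
Qed.

Lemma eb_2 : exp (-(1/2)) <= (606530686081/1000000000000).
Proof. replace (-(1/2)) with (INR 2 * (-(1/4))) by (simpl; lra). apply exp_q4. unfold qh. lra. Qed.

Lemma eb_3 : exp (-(3/4)) <= (94473316709/200000000000).
Proof. replace (-(3/4)) with (INR 3 * (-(1/4))) by (simpl; lra). apply exp_q4. unfold qh. lra. Qed.

Lemma eb_5 : exp (-(5/4)) <= (286504827999/1000000000000).
Proof. replace (-(5/4)) with (INR 5 * (-(1/4))) by (simpl; lra). apply exp_q4. unfold qh. lra. Qed.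

Lemma eb_7 : exp (-(7/4)) <= (43443492473/250000000000).
Proof. replace (-(7/4)) with (INR 7 * (-(1/4))) by (simpl; lra). apply exp_q4. unfold qh. lra. Qed.

Lemma eb_10 : exp (-(5/2)) <= (82085016467/1000000000000).
Proof. replace (-(5/2)) with (INR 10 * (-(1/4))) by (simpl; lra). apply exp_q4. unfold qh. lra. Qed.

Lemma eb_14 : exp (-(7/2)) <= (7549348153/250000000000).
Proof. replace (-(7/2)) with (INR 14 * (-(1/4))) by (simpl; lra). apply exp_q4. unfold qh. lra. Qed.

Lemma eb_18 : exp (-(9/2)) <= (2221800177/200000000000).
Proof. replace (-(9/2)) with (INR 18 * (-(1/4))) by (simpl; lra). apply exp_q4. unfold qh. lra. Qed.

Lemma eb_22 : exp (-(11/2)) <= (4086773393/1000000000000).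
Proof. replace (-(11/2)) with (INR 22 * (-(1/4))) by (simpl; lra). apply exp_q4. unfold qh. lra. Qed.

Lemma eb_28 : exp (-(7)) <= (911882521/1000000000000).
Proof. replace (-(7)) with (INR 28 * (-(1/4))) by (simpl; lra). apply exp_q4. unfold qh. lra. Qed.

Lemma eb_40 : exp (-(10)) <= (4539997/100000000000).
Proof. replace (-(10)) with (INR 40 * (-(1/4))) by (simpl; lra). apply exp_q4. unfold qh. lra. Qed.

Lemma Mub_0 : M (9/10) <= (819573/1000000).
Proof.
  apply (M_ub (9/10) [((1/2), (8741573/10000000)); ((3/4), (7682213/10000000)); ((5/4), (730381/1250000)); ((7/4), (4573481/10000000)); ((5/2), (677439/2000000)); ((7/2), (2490411/10000000)); ((9/2), (980581/5000000)); ((11/2), (807443/5000000)); ((7), (637609/5000000)); ((10), (896377/10000000))] (10) (819573/1000000)).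
  - lra.
  - simpl. repeat split; lra.
  - reflexivity.
  - lra.
  - pose proof eb_2. pose proof eb_3. pose proof eb_5. pose proof eb_7. pose proof eb_10. pose proof eb_14. pose proof eb_18. pose proof eb_22. pose proof eb_28. pose proof eb_40. pose proof (exp_pos (-(10))).
    cbn [chain_val]. unfold pval, Gf, alp, bet. rewrite Ropp_0, exp_0. lra.
Qed.

Lemma Mub_1 : M (11/10) <= (708619/1000000).
Proof.
  apply (M_ub (11/10) [((1/2), (1820733/2000000)); ((3/4), (4131137/5000000)); ((5/4), (6606279/10000000)); ((7/4), (1330429/2500000)); ((5/2), (4027387/10000000)); ((7/2), (1499133/5000000)); ((9/2), (2374531/10000000)); ((11/2), (980581/5000000)); ((7), (1552379/10000000)); ((10), (218681/2000000))] (10) (708619/1000000)).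
  - lra.
  - simpl. repeat split; lra.
  - reflexivity.
  - lra.
  - pose proof eb_2. pose proof eb_3. pose proof eb_5. pose proof eb_7. pose proof eb_10. pose proof eb_14. pose proof eb_18. pose proof eb_22. pose proof eb_28. pose proof eb_40. pose proof (exp_pos (-(10))).
    cbn [chain_val]. unfold pval, Gf, alp, bet. rewrite Ropp_0, exp_0. lra.
Qed.

Lemma Mub_2 : M (13/10) <= (31229/50000).
Proof.
  apply (M_ub (13/10) [((1/2), (9333457/10000000)); ((3/4), (270683/312500)); ((5/4), (7208331/10000000)); ((7/4), (5963241/10000000)); ((5/2), (576691/1250000)); ((7/2), (1740933/5000000)); ((9/2), (2775397/10000000)); ((11/2), (460051/2000000)); ((7), (912961/5000000)); ((10), (1289153/10000000))] (10) (31229/50000)).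
  - lra.
  - simpl. repeat split; lra.
  - reflexivity.
  - lra.
  - pose proof eb_2. pose proof eb_3. pose proof eb_5. pose proof eb_7. pose proof eb_10. pose proof eb_14. pose proof eb_18. pose proof eb_22. pose proof eb_28. pose proof eb_40. pose proof (exp_pos (-(10))).
    cbn [chain_val]. unfold pval, Gf, alp, bet. rewrite Ropp_0, exp_0. lra.
Qed.

Lemma Mub_3 : M (3/2) <= (279239/500000).
Proof.
  apply (M_ub (3/2) [((1/2), (9486833/10000000)); ((3/4), (559017/625000)); ((5/4), (7682213/10000000)); ((7/4), (3253957/5000000)); ((5/2), (2572479/5000000)); ((7/2), (3939193/10000000)); ((9/2), (1581139/5000000)); ((11/2), (105247/400000)); ((7), (2095291/10000000)); ((10), (296681/2000000))] (10) (279239/500000)).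
  - lra.
  - simpl. repeat split; lra.
  - reflexivity.
  - lra.
  - pose proof eb_2. pose proof eb_3. pose proof eb_5. pose proof eb_7. pose proof eb_10. pose proof eb_14. pose proof eb_18. pose proof eb_22. pose proof eb_28. pose proof eb_40. pose proof (exp_pos (-(10))).
    cbn [chain_val]. unfold pval, Gf, alp, bet. rewrite Ropp_0, exp_0. lra.
Qed.

Lemma Mub_4 : M (9/5) <= (481933/1000000).
Proof.
  apply (M_ub (9/5) [((1/2), (481759/500000)); ((3/4), (923077/1000000)); ((5/4), (82137/100000)); ((7/4), (143399/200000)); ((5/2), (730381/1250000)); ((7/2), (4573481/10000000)); ((9/2), (3713907/10000000)); ((11/2), (3110391/10000000)); ((7), (2490411/10000000)); ((10), (177153/1000000))] (10) (481933/1000000)).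
  - lra.
  - simpl. repeat split; lra.
  - reflexivity.
  - lra.
  - pose proof eb_2. pose proof eb_3. pose proof eb_5. pose proof eb_7. pose proof eb_10. pose proof eb_14. pose proof eb_18. pose proof eb_22. pose proof eb_28. pose proof eb_40. pose proof (exp_pos (-(10))).
    cbn [chain_val]. unfold pval, Gf, alp, bet. rewrite Ropp_0, exp_0. lra.
Qed.

Lemma Mub_5 : M (21/10) <= (423717/1000000).
Proof.
  apply (M_ub (21/10) [((1/2), (9728063/10000000)); ((3/4), (470871/500000)); ((5/4), (8592929/10000000)); ((7/4), (7682213/10000000)); ((5/2), (6431921/10000000)); ((7/2), (2572479/5000000)); ((9/2), (845771/2000000)); ((11/2), (445877/1250000)); ((7), (2873479/10000000)); ((10), (2055173/10000000))] (10) (423717/1000000)).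
  - lra.
  - simpl. repeat split; lra.
  - reflexivity.
  - lra.
  - pose proof eb_2. pose proof eb_3. pose proof eb_5. pose proof eb_7. pose proof eb_10. pose proof eb_14. pose proof eb_18. pose proof eb_22. pose proof eb_28. pose proof eb_40. pose proof (exp_pos (-(10))).
    cbn [chain_val]. unfold pval, Gf, alp, bet. rewrite Ropp_0, exp_0. lra.
Qed.

Lemma Mub_6 : M (5/2) <= (182371/500000).
Proof.
  apply (M_ub (5/2) [((1/2), (9805807/10000000)); ((3/4), (9578263/10000000)); ((5/4), (559017/625000)); ((7/4), (25601/31250)); ((5/2), (1767767/2500000)); ((7/2), (2906191/5000000)); ((9/2), (485643/1000000)); ((11/2), (413803/1000000)); ((7), (840841/2500000)); ((10), (2425357/10000000))] (10) (182371/500000)).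
  - lra.
  - simpl. repeat split; lra.
  - reflexivity.
  - lra.
  - pose proof eb_2. pose proof eb_3. pose proof eb_5. pose proof eb_7. pose proof eb_10. pose proof eb_14. pose proof eb_18. pose proof eb_22. pose proof eb_28. pose proof eb_40. pose proof (exp_pos (-(10))).
    cbn [chain_val]. unfold pval, Gf, alp, bet. rewrite Ropp_0, exp_0. lra.
Qed.

Lemma Mub_7 : M (3) <= (19403/62500).
Proof.
  apply (M_ub (3) [((1/2), (493197/500000)); ((3/4), (4850713/5000000)); ((5/4), (923077/1000000)); ((7/4), (863779/1000000)); ((5/2), (7682213/10000000)); ((7/2), (3253957/5000000)); ((9/2), (2773501/5000000)); ((11/2), (2394261/5000000)); ((7), (3939193/10000000)); ((10), (2873479/10000000))] (10) (19403/62500)).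
  - lra.
  - simpl. repeat split; lra.
  - reflexivity.
  - lra.
  - pose proof eb_2. pose proof eb_3. pose proof eb_5. pose proof eb_7. pose proof eb_10. pose proof eb_14. pose proof eb_18. pose proof eb_22. pose proof eb_28. pose proof eb_40. pose proof (exp_pos (-(10))).
    cbn [chain_val]. unfold pval, Gf, alp, bet. rewrite Ropp_0, exp_0. lra.
Qed.

Lemma Mub_8 : M (7/2) <= (54007/200000).
Proof.
  apply (M_ub (7/2) [((1/2), (1979899/2000000)); ((3/4), (391121/400000)); ((5/4), (470871/500000)); ((7/4), (559017/625000)); ((5/2), (1627467/2000000)); ((7/2), (1767767/2500000)); ((9/2), (6139407/10000000)); ((11/2), (1073751/2000000)); ((7), (559017/1250000)); ((10), (660701/2000000))] (10) (54007/200000)).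
  - lra.
  - simpl. repeat split; lra.
  - reflexivity.
  - lra.
  - pose proof eb_2. pose proof eb_3. pose proof eb_5. pose proof eb_7. pose proof eb_10. pose proof eb_14. pose proof eb_18. pose proof eb_22. pose proof eb_28. pose proof eb_40. pose proof (exp_pos (-(10))).
    cbn [chain_val]. unfold pval, Gf, alp, bet. rewrite Ropp_0, exp_0. lra.
Qed.

Lemma Mub_9 : M (4) <= (119401/500000).
Proof.
  apply (M_ub (4) [((1/2), (9922779/10000000)); ((3/4), (4914361/5000000)); ((5/4), (11931/12500)); ((7/4), (4580787/5000000)); ((5/2), (529999/625000)); ((7/2), (7525767/10000000)); ((9/2), (6643639/10000000)); ((11/2), (5881717/10000000)); ((7), (496139/1000000)); ((10), (3713907/10000000))] (10) (119401/500000)).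
  - lra.
  - simpl. repeat split; lra.
  - reflexivity.
  - lra.
  - pose proof eb_2. pose proof eb_3. pose proof eb_5. pose proof eb_7. pose proof eb_10. pose proof eb_14. pose proof eb_18. pose proof eb_22. pose proof eb_28. pose proof eb_40. pose proof (exp_pos (-(10))).
    cbn [chain_val]. unfold pval, Gf, alp, bet. rewrite Ropp_0, exp_0. lra.
Qed.

Lemma Mlt_0 t : (9/10) <= t <= (11/10) -> M t < arccot t.
Proof.
  intros Ht.
  assert (Hc := M_convex (9/10) (11/10) t ltac:(lra) ltac:(lra) Ht).
  pose proof Mub_0 as U1. pose proof Mub_1 as U2.
  assert (Htan := arccot_tangent (1) t ltac:(lra) ltac:(lra)).
  assert (Ha : arccot 1 = PI/4) by (unfold arccot; rewrite atan_1; field).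
  pose proof PI_gt.
  assert (Hl1 : 0 <= ((11/10) - t)/((11/10) - (9/10))) by (apply Rle_mult_inv_pos; lra).
  assert (Hl2 : 0 <= 1 - ((11/10) - t)/((11/10) - (9/10))) by (apply (Rmult_le_reg_r ((11/10) - (9/10))); [lra|]; field_simplify; lra).
  assert (A1 : ((11/10) - t)/((11/10) - (9/10)) * M (9/10) <= ((11/10) - t)/((11/10) - (9/10)) * (819573/1000000)) by (apply Rmult_le_compat_l; lra).
  assert (A2 : (1 - ((11/10) - t)/((11/10) - (9/10))) * M (11/10) <= (1 - ((11/10) - t)/((11/10) - (9/10))) * (708619/1000000)) by (apply Rmult_le_compat_l; lra).
  lra.
Qed.

Lemma Mlt_1 t : (11/10) <= t <= (13/10) -> M t < arccot t.
Proof.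
  intros Ht.
  assert (Hc := M_convex (11/10) (13/10) t ltac:(lra) ltac:(lra) Ht).
  pose proof Mub_1 as U1. pose proof Mub_2 as U2.
  assert (Htan := arccot_tangent (1) t ltac:(lra) ltac:(lra)).
  assert (Ha : arccot 1 = PI/4) by (unfold arccot; rewrite atan_1; field).
  pose proof PI_gt.
  assert (Hl1 : 0 <= ((13/10) - t)/((13/10) - (11/10))) by (apply Rle_mult_inv_pos; lra).
  assert (Hl2 : 0 <= 1 - ((13/10) - t)/((13/10) - (11/10))) by (apply (Rmult_le_reg_r ((13/10) - (11/10))); [lra|]; field_simplify; lra).
  assert (A1 : ((13/10) - t)/((13/10) - (11/10)) * M (11/10) <= ((13/10) - t)/((13/10) - (11/10)) * (708619/1000000)) by (apply Rmult_le_compat_l; lra).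
  assert (A2 : (1 - ((13/10) - t)/((13/10) - (11/10))) * M (13/10) <= (1 - ((13/10) - t)/((13/10) - (11/10))) * (31229/50000)) by (apply Rmult_le_compat_l; lra).
  lra.
Qed.

Lemma Mlt_2 t : (13/10) <= t <= (3/2) -> M t < arccot t.
Proof.
  intros Ht.
  assert (Hc := M_convex (13/10) (3/2) t ltac:(lra) ltac:(lra) Ht).
  pose proof Mub_2 as U1. pose proof Mub_3 as U2.
  assert (Htan := arccot_tangent (6/5) t ltac:(lra) ltac:(lra)).
  rewrite (arccot_inv (6/5)) in Htan by lra.
  assert (Hm : 0 <= / (6/5)) by (left; apply Rinv_0_lt_compat; lra).
  pose proof (atan_lb_P15 (/ (6/5)) Hm).
  assert (Hl1 : 0 <= ((3/2) - t)/((3/2) - (13/10))) by (apply Rle_mult_inv_pos; lra).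
  assert (Hl2 : 0 <= 1 - ((3/2) - t)/((3/2) - (13/10))) by (apply (Rmult_le_reg_r ((3/2) - (13/10))); [lra|]; field_simplify; lra).
  assert (A1 : ((3/2) - t)/((3/2) - (13/10)) * M (13/10) <= ((3/2) - t)/((3/2) - (13/10)) * (31229/50000)) by (apply Rmult_le_compat_l; lra).
  assert (A2 : (1 - ((3/2) - t)/((3/2) - (13/10))) * M (3/2) <= (1 - ((3/2) - t)/((3/2) - (13/10))) * (279239/500000)) by (apply Rmult_le_compat_l; lra).
  lra.
Qed.

Lemma Mlt_3 t : (3/2) <= t <= (9/5) -> M t < arccot t.
Proof.
  intros Ht.
  assert (Hc := M_convex (3/2) (9/5) t ltac:(lra) ltac:(lra) Ht).
  pose proof Mub_3 as U1. pose proof Mub_4 as U2.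
  assert (Htan := arccot_tangent (8/5) t ltac:(lra) ltac:(lra)).
  rewrite (arccot_inv (8/5)) in Htan by lra.
  assert (Hm : 0 <= / (8/5)) by (left; apply Rinv_0_lt_compat; lra).
  pose proof (atan_lb_P15 (/ (8/5)) Hm).
  assert (Hl1 : 0 <= ((9/5) - t)/((9/5) - (3/2))) by (apply Rle_mult_inv_pos; lra).
  assert (Hl2 : 0 <= 1 - ((9/5) - t)/((9/5) - (3/2))) by (apply (Rmult_le_reg_r ((9/5) - (3/2))); [lra|]; field_simplify; lra).
  assert (A1 : ((9/5) - t)/((9/5) - (3/2)) * M (3/2) <= ((9/5) - t)/((9/5) - (3/2)) * (279239/500000)) by (apply Rmult_le_compat_l; lra).
  assert (A2 : (1 - ((9/5) - t)/((9/5) - (3/2))) * M (9/5) <= (1 - ((9/5) - t)/((9/5) - (3/2))) * (481933/1000000)) by (apply Rmult_le_compat_l; lra).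
  lra.
Qed.

Lemma Mlt_4 t : (9/5) <= t <= (21/10) -> M t < arccot t.
Proof.
  intros Ht.
  assert (Hc := M_convex (9/5) (21/10) t ltac:(lra) ltac:(lra) Ht).
  pose proof Mub_4 as U1. pose proof Mub_5 as U2.
  assert (Htan := arccot_tangent (2) t ltac:(lra) ltac:(lra)).
  rewrite (arccot_inv (2)) in Htan by lra.
  assert (Hm : 0 <= / (2)) by (left; apply Rinv_0_lt_compat; lra).
  pose proof (atan_lb_P15 (/ (2)) Hm).
  assert (Hl1 : 0 <= ((21/10) - t)/((21/10) - (9/5))) by (apply Rle_mult_inv_pos; lra).
  assert (Hl2 : 0 <= 1 - ((21/10) - t)/((21/10) - (9/5))) by (apply (Rmult_le_reg_r ((21/10) - (9/5))); [lra|]; field_simplify; lra).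
  assert (A1 : ((21/10) - t)/((21/10) - (9/5)) * M (9/5) <= ((21/10) - t)/((21/10) - (9/5)) * (481933/1000000)) by (apply Rmult_le_compat_l; lra).
  assert (A2 : (1 - ((21/10) - t)/((21/10) - (9/5))) * M (21/10) <= (1 - ((21/10) - t)/((21/10) - (9/5))) * (423717/1000000)) by (apply Rmult_le_compat_l; lra).
  lra.
Qed.

Lemma Mlt_5 t : (21/10) <= t <= (5/2) -> M t < arccot t.
Proof.
  intros Ht.
  assert (Hc := M_convex (21/10) (5/2) t ltac:(lra) ltac:(lra) Ht).
  pose proof Mub_5 as U1. pose proof Mub_6 as U2.
  assert (Htan := arccot_tangent (23/10) t ltac:(lra) ltac:(lra)).
  rewrite (arccot_inv (23/10)) in Htan by lra.
  assert (Hm : 0 <= / (23/10)) by (left; apply Rinv_0_lt_compat; lra).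
  pose proof (atan_lb_P15 (/ (23/10)) Hm).
  assert (Hl1 : 0 <= ((5/2) - t)/((5/2) - (21/10))) by (apply Rle_mult_inv_pos; lra).
  assert (Hl2 : 0 <= 1 - ((5/2) - t)/((5/2) - (21/10))) by (apply (Rmult_le_reg_r ((5/2) - (21/10))); [lra|]; field_simplify; lra).
  assert (A1 : ((5/2) - t)/((5/2) - (21/10)) * M (21/10) <= ((5/2) - t)/((5/2) - (21/10)) * (423717/1000000)) by (apply Rmult_le_compat_l; lra).
  assert (A2 : (1 - ((5/2) - t)/((5/2) - (21/10))) * M (5/2) <= (1 - ((5/2) - t)/((5/2) - (21/10))) * (182371/500000)) by (apply Rmult_le_compat_l; lra).
  lra.
Qed.

Lemma Mlt_6 t : (5/2) <= t <= (3) -> M t < arccot t.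
Proof.
  intros Ht.
  assert (Hc := M_convex (5/2) (3) t ltac:(lra) ltac:(lra) Ht).
  pose proof Mub_6 as U1. pose proof Mub_7 as U2.
  assert (Htan := arccot_tangent (11/4) t ltac:(lra) ltac:(lra)).
  rewrite (arccot_inv (11/4)) in Htan by lra.
  assert (Hm : 0 <= / (11/4)) by (left; apply Rinv_0_lt_compat; lra).
  pose proof (atan_lb_P15 (/ (11/4)) Hm).
  assert (Hl1 : 0 <= ((3) - t)/((3) - (5/2))) by (apply Rle_mult_inv_pos; lra).
  assert (Hl2 : 0 <= 1 - ((3) - t)/((3) - (5/2))) by (apply (Rmult_le_reg_r ((3) - (5/2))); [lra|]; field_simplify; lra).
  assert (A1 : ((3) - t)/((3) - (5/2)) * M (5/2) <= ((3) - t)/((3) - (5/2)) * (182371/500000)) by (apply Rmult_le_compat_l; lra).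
  assert (A2 : (1 - ((3) - t)/((3) - (5/2))) * M (3) <= (1 - ((3) - t)/((3) - (5/2))) * (19403/62500)) by (apply Rmult_le_compat_l; lra).
  lra.
Qed.

Lemma Mlt_7 t : (3) <= t <= (7/2) -> M t < arccot t.
Proof.
  intros Ht.
  assert (Hc := M_convex (3) (7/2) t ltac:(lra) ltac:(lra) Ht).
  pose proof Mub_7 as U1. pose proof Mub_8 as U2.
  assert (Htan := arccot_tangent (13/4) t ltac:(lra) ltac:(lra)).
  rewrite (arccot_inv (13/4)) in Htan by lra.
  assert (Hm : 0 <= / (13/4)) by (left; apply Rinv_0_lt_compat; lra).
  pose proof (atan_lb_P15 (/ (13/4)) Hm).
  assert (Hl1 : 0 <= ((7/2) - t)/((7/2) - (3))) by (apply Rle_mult_inv_pos; lra).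
  assert (Hl2 : 0 <= 1 - ((7/2) - t)/((7/2) - (3))) by (apply (Rmult_le_reg_r ((7/2) - (3))); [lra|]; field_simplify; lra).
  assert (A1 : ((7/2) - t)/((7/2) - (3)) * M (3) <= ((7/2) - t)/((7/2) - (3)) * (19403/62500)) by (apply Rmult_le_compat_l; lra).
  assert (A2 : (1 - ((7/2) - t)/((7/2) - (3))) * M (7/2) <= (1 - ((7/2) - t)/((7/2) - (3))) * (54007/200000)) by (apply Rmult_le_compat_l; lra).
  lra.
Qed.

Lemma Mlt_8 t : (7/2) <= t <= (4) -> M t < arccot t.
Proof.
  intros Ht.
  assert (Hc := M_convex (7/2) (4) t ltac:(lra) ltac:(lra) Ht).
  pose proof Mub_8 as U1. pose proof Mub_9 as U2.
  assert (Htan := arccot_tangent (15/4) t ltac:(lra) ltac:(lra)).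
  rewrite (arccot_inv (15/4)) in Htan by lra.
  assert (Hm : 0 <= / (15/4)) by (left; apply Rinv_0_lt_compat; lra).
  pose proof (atan_lb_P15 (/ (15/4)) Hm).
  assert (Hl1 : 0 <= ((4) - t)/((4) - (7/2))) by (apply Rle_mult_inv_pos; lra).
  assert (Hl2 : 0 <= 1 - ((4) - t)/((4) - (7/2))) by (apply (Rmult_le_reg_r ((4) - (7/2))); [lra|]; field_simplify; lra).
  assert (A1 : ((4) - t)/((4) - (7/2)) * M (7/2) <= ((4) - t)/((4) - (7/2)) * (54007/200000)) by (apply Rmult_le_compat_l; lra).
  assert (A2 : (1 - ((4) - t)/((4) - (7/2))) * M (4) <= (1 - ((4) - t)/((4) - (7/2))) * (119401/500000)) by (apply Rmult_le_compat_l; lra).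
  lra.
Qed.

Theorem M_lt_arccot t : 9/10 <= t -> M t < arccot t.
Proof.
  intros Ht.
  destruct (Rle_lt_dec t (11/10)) as [H0|H0]. { apply Mlt_0. lra. }
  destruct (Rle_lt_dec t (13/10)) as [H1|H1]. { apply Mlt_1. lra. }
  destruct (Rle_lt_dec t (3/2)) as [H2|H2]. { apply Mlt_2. lra. }
  destruct (Rle_lt_dec t (9/5)) as [H3|H3]. { apply Mlt_3. lra. }
  destruct (Rle_lt_dec t (21/10)) as [H4|H4]. { apply Mlt_4. lra. }
  destruct (Rle_lt_dec t (5/2)) as [H5|H5]. { apply Mlt_5. lra. }
  destruct (Rle_lt_dec t (3)) as [H6|H6]. { apply Mlt_6. lra. }
  destruct (Rle_lt_dec t (7/2)) as [H7|H7]. { apply Mlt_7. lra. }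
  destruct (Rle_lt_dec t (4)) as [H8|H8]. { apply Mlt_8. lra. }
  apply M_lt_arccot_large. lra.
Qed.

Lemma sin_lb3 a : 0 <= a <= 4 -> a - a^3/6 <= sin a.
Proof.
  intros Ha. destruct (pre_sin_bound a 0 (proj1 Ha) (proj2 Ha)) as [H _].
  unfold sin_approx, sin_term in H. simpl in H. lra.
Qed.

Lemma sin_ub1 a : 0 <= a -> sin a <= a.
Proof. intros [H|H]. left; now apply sin_lt_x. subst; rewrite sin_0; lra. Qed.

Definition sinc (u : R) : R := if Req_EM_T u 0 then 1 else sin u / u.

Lemma sinc_bound y : y <> 0 -> Rabs y <= 1 -> Rabs (sin y / y - 1) <= y^2 / 6.
Proof.
  intros Hy Hy1.
  assert (Hodd : sin y / y = sin (Rabs y) / Rabs y).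
  { destruct (Rle_lt_dec 0 y). rewrite Rabs_pos_eq by lra. auto.
    rewrite Rabs_left by lra. rewrite sin_neg. field. auto. }
  rewrite Hodd, <- pow2_abs.
  assert (Ha : 0 < Rabs y) by (now apply Rabs_pos_lt).
  generalize dependent (Rabs y). intros a Ha1 _ Ha.
  pose proof (sin_lb3 a ltac:(lra)). pose proof (sin_ub1 a ltac:(lra)).
  apply Rabs_le. split.
  - replace (sin a / a - 1) with ((sin a - a) / a) by (field; lra).
    replace (-(a^2/6)) with ((-(a^3/6))/a) by (field; lra). unfold Rdiv.
    apply Rmult_le_compat_r. left; apply Rinv_0_lt_compat; lra. lra.
  - assert (sin a / a <= 1). { apply (Rmult_le_reg_r a); auto. unfold Rdiv. rewrite Rmult_assoc, Rinv_l; lra. }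
    assert (0 <= a^2/6) by nra. lra.
Qed.

Lemma sinc_cont x : continuous sinc x.
Proof.
  destruct (Req_EM_T x 0) as [Hx|Hx].
  - subst. apply continuity_pt_filterlim.
    intros eps Heps. exists (Rmin 1 (Rmin eps 1)). split. apply Rmin_pos; [lra|apply Rmin_pos; lra].
    intros y [_ Hy]. unfold R_dist in *. simpl in *. unfold Rdist in *. rewrite Rminus_0_r in Hy.
    unfold sinc. destruct (Req_EM_T 0 0) as [_|C]; [|lra].
    destruct (Req_EM_T y 0) as [->|Hy0]. rewrite Rminus_diag, Rabs_R0; lra.
    pose proof (Rmin_l 1 (Rmin eps 1)). pose proof (Rmin_r 1 (Rmin eps 1)).
    pose proof (Rmin_l eps 1). pose proof (Rmin_r eps 1).
    eapply Rle_lt_trans. apply sinc_bound; auto; lra.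
    assert (y^2 <= Rabs y * 1). { rewrite <- pow2_abs. replace (Rabs y ^ 2) with (Rabs y * Rabs y) by ring. apply Rmult_le_compat_l. apply Rabs_pos. lra. }
    lra.
  - apply (continuous_ext_loc sinc (fun y => sin y / y)).
    + assert (Hp : 0 < Rabs x) by (now apply Rabs_pos_lt).
      exists (mkposreal _ Hp). intros y Hy. unfold sinc. destruct (Req_EM_T y 0) as [->|]; auto.
      exfalso. unfold ball in Hy. simpl in Hy. unfold AbsRing_ball, abs, minus, plus, opp in Hy. simpl in Hy.
      replace (0 + - x) with (- x) in Hy by ring. rewrite Rabs_Ropp in Hy. lra.
    + apply cont_of_deriv. auto_derive. auto.
Qed.

Lemma ex_RInt_sinu b : 0 <= b -> ex_RInt (fun u => sin u / u) 0 b.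
Proof.
  intros Hb. apply (ex_RInt_ext sinc). intros x Hx. rewrite Rmin_left, Rmax_right in Hx by lra.
  unfold sinc. destruct (Req_EM_T x 0); [lra|auto].
  apply ex_RInt_cont. apply sinc_cont.
Qed.

Lemma HasInt_shift (f : R -> R) a a' l : a <= a' -> (forall b, a <= b -> ex_RInt f a b) ->
  HasInt f a' l -> HasInt f a (RInt f a a' + l).
Proof.
  intros Haa Hex [Hex' Hl]. split; auto.
  apply (is_lim_ext_loc (fun b => RInt f a a' + RInt f a' b)).
  - exists a'. intros b Hb.
    assert (ex_RInt f a' b) by (apply Hex'; lra).
    assert (ex_RInt f a a') by (apply Hex; lra).
    rewrite <- (RInt_Chasles f a a' b) by auto. reflexivity.
  - apply is_lim_plus'. apply is_lim_const. exact Hl.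
Qed.

Definition Gs (t : R) : R := sin t * Lc t + cos t * Ls t.
Definition S0 : R := int_to_infty (fun u => sin u / u) 0.

Lemma S0_split t : 0 < t -> S0 = RInt (fun u => sin u / u) 0 t + Gs t.
Proof.
  intros Ht. unfold S0. apply HasInt_unique. apply HasInt_shift. lra.
  intros b Hb. now apply ex_RInt_sinu. now apply S_tail.
Qed.

Lemma Gs_nonneg t : 0 < t <= 3/2 -> 0 <= Gs t.
Proof.
  intros Ht. unfold Gs. destruct (Lc_spec t) as [_ [H1 _]]; [lra|]. destruct (Ls_spec t) as [_ [H2 _]]; [lra|].
  pose proof PI2_3_2.
  assert (0 <= sin t) by (apply sin_ge_0; lra). assert (0 <= cos t) by (apply cos_ge_0; lra).
  apply Rplus_le_le_0_compat; apply Rmult_le_pos; auto.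
Qed.

Lemma RInt_sinu_bounds t : 0 <= t <= 1 -> t - t^3/18 <= RInt (fun u => sin u / u) 0 t <= t.
Proof.
  intros Ht.
  assert (Hi1 : is_RInt (fun u => 1 - u^2/6) 0 t (t - t^3/18)).
  { assert (H := is_RInt_derive (V:=R_CompleteNormedModule) (fun u => u - u^3/18) (fun u => 1 - u^2/6) 0 t).
    replace (t - t^3/18) with (minus (t - t^3/18) (0 - 0^3/18)) by (unfold minus, plus, opp; simpl; field).
    apply H. intros x _. auto_derive. auto. field. intros x _. apply cont_of_deriv. auto_derive. auto. }
  assert (Hi2 : is_RInt (fun u => 1) 0 t t).
  { assert (H := is_RInt_derive (V:=R_CompleteNormedModule) (fun u => u) (fun u => 1) 0 t).
    replace t with (minus t 0) at 2 by (unfold minus, plus, opp; simpl; ring).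
    apply H. intros x _. auto_derive. auto. auto. intros x _. apply continuous_const. }
  split.
  - rewrite <- (is_RInt_unique _ _ _ _ Hi1). apply RInt_le. lra. eexists; exact Hi1. apply ex_RInt_sinu; lra.
    intros u Hu. pose proof (sin_lb3 u ltac:(lra)).
    apply (Rmult_le_reg_r u). lra. unfold Rdiv. rewrite Rmult_assoc, Rinv_l by lra. field_simplify; lra.
  - rewrite <- (is_RInt_unique _ _ _ _ Hi2) at 2. apply RInt_le. lra. apply ex_RInt_sinu; lra. eexists; exact Hi2.
    intros u Hu. pose proof (sin_ub1 u ltac:(lra)).
    apply (Rmult_le_reg_r u). lra. unfold Rdiv. rewrite Rmult_assoc, Rinv_l by lra. lra.
Qed.

Lemma Ls_le_pi2 t : 0 < t -> Ls t <= PI / 2.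
Proof.
  intros Ht. destruct (Ls_spec t Ht) as [H _].
  eapply (HasInt_ub _ 0 (Ls t)); [|exact H]. intros b Hb.
  assert (Hi : is_RInt g1 0 b (atan b - atan 0)).
  { assert (H' := is_RInt_derive (V:=R_CompleteNormedModule) atan g1 0 b).
    replace (atan b - atan 0) with (minus (atan b) (atan 0)) by (unfold minus, plus, opp; simpl; ring).
    apply H'. intros x _. replace (g1 x) with (/ (1 + x^2)) by (unfold g1; field; nra). apply atan_deriv.
    intros x _. apply g1_cont. }
  apply Rle_trans with (RInt g1 0 b).
  - apply RInt_le. lra. apply ex_RInt_cont. intros x. apply cont_mul. apply cont_expl. apply g1_cont.
    eexists; exact Hi. intros x Hx. destruct (g1_bnd x) as [Hg _]; [lra|].
    assert (exp (-(t*x)) <= 1) by (rewrite <- exp_0; apply exp_le_mono; nra).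
    rewrite <- (Rmult_1_l (g1 x)) at 2. apply Rmult_le_compat_r; auto.
  - rewrite (is_RInt_unique _ _ _ _ Hi), atan_0. pose proof (atan_bound b). lra.
Qed.

Lemma Lc_le t e : 0 < t -> 0 < e -> Lc t <= e / t + Ls t / (4 * e).
Proof.
  intros Ht He. destruct (Lc_spec t Ht) as [H1 _]. destruct (Ls_spec t Ht) as [H2 _].
  assert (H3 := HasInt_plus _ _ _ _ _ (HasInt_scal _ e _ _ (HasInt_exp t Ht)) (HasInt_scal _ (/ (4*e)) _ _ H2)).
  replace (e / t + Ls t / (4*e)) with (e * (1/t) + / (4*e) * Ls t) by (field; lra).
  eapply HasInt_le; [|exact H1|exact H3]. intros x Hx. cbv beta.
  pose proof (exp_pos (-(t*x))).
  replace (e * exp (-(t*x)) + / (4*e) * (exp (-(t*x)) * g1 x)) with (exp (-(t*x)) * (e + g1 x / (4*e))) by (field; lra).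
  apply Rmult_le_compat_l. lra. unfold g1, g2.
  apply (Rmult_le_reg_r (4 * e * (1 + x^2))). nra.
  replace (x / (1 + x^2) * (4 * e * (1 + x^2))) with (4*e*x) by (field; nra).
  replace ((e + 1 / (1 + x^2) / (4*e)) * (4 * e * (1 + x^2))) with (4*e^2*(1+x^2) + 1) by (field; split; nra).
  assert (0 <= (2*e*x - 1)^2) by apply pow2_ge_0. nra.
Qed.

Lemma S0_le : S0 <= PI / 2.
Proof.
  assert (Hk : forall eta, 0 < eta <= 1 -> S0 <= 3 * eta + PI / 2).
  { intros eta He. set (d := eta^2). assert (Hd : 0 < d <= 1) by (unfold d; split; nra).
    rewrite (S0_split d) by lra.
    destruct (RInt_sinu_bounds d ltac:(lra)) as [_ HR].
    destruct (Lc_spec d) as [_ [HLc _]]; [lra|]. destruct (Ls_spec d) as [_ [HLs _]]; [lra|].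
    pose proof (Ls_le_pi2 d ltac:(lra)). pose proof (Lc_le d eta ltac:(lra) ltac:(lra)).
    pose proof PI_4.
    assert (Hs : sin d <= d) by (apply sin_ub1; lra). assert (0 <= sin d) by (apply sin_ge_0; pose proof PI2_3_2; lra).
    pose proof (COS_bound d).
    unfold Gs.
    assert (sin d * Lc d <= d * Lc d) by (apply Rmult_le_compat_r; lra).
    assert (cos d * Ls d <= Ls d) by (rewrite <- (Rmult_1_l (Ls d)) at 2; apply Rmult_le_compat_r; lra).
    assert (d * Lc d <= d * (eta / d + Ls d / (4 * eta))) by (apply Rmult_le_compat_l; lra).
    assert (E1 : d * (eta / d + Ls d / (4 * eta)) = eta + eta * Ls d / 4) by (unfold d; field; lra).
    assert (eta * Ls d <= eta * (PI/2)) by (apply Rmult_le_compat_l; lra).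
    assert (d <= eta) by (unfold d; nra).
    clearbody d. nra. }
  destruct (Rle_lt_dec S0 (PI/2)) as [H|H]; auto.
  set (eta := Rmin 1 ((S0 - PI/2) / 4)).
  assert (He : 0 < eta <= 1). { unfold eta. split. apply Rmin_pos. lra. lra. apply Rmin_l. }
  assert (eta <= (S0 - PI/2)/4) by apply Rmin_r.
  pose proof (Hk eta He). clearbody eta. lra.
Qed.

Lemma S0_ge : 0 <= S0.
Proof.
  rewrite (S0_split 1) by lra.
  destruct (RInt_sinu_bounds 1 ltac:(lra)) as [H _].
  pose proof (Gs_nonneg 1 ltac:(lra)). lra.
Qed.

Lemma E_lt_arccot t : 9/10 <= t -> Cmod (E t) < arccot t.
Proof. intros Ht. pose proof (part_a t ltac:(lra)). pose proof (M_lt_arccot t Ht). lra. Qed.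

Lemma Gs_le_Cmod t : 0 < t -> Rabs (Gs t) <= Cmod (E t).
Proof.
  intros Ht. rewrite Cmod_E by auto. unfold Gs.
  rewrite <- sqrt_Rsqr_abs. apply sqrt_le_1_alt.
  pose proof (sin2_cos2 t). unfold Rsqr in *.
  assert (E1 : (Lc t ^ 2 + Ls t ^ 2) * (sin t * sin t + cos t * cos t) - (sin t * Lc t + cos t * Ls t) * (sin t * Lc t + cos t * Ls t)
     = (cos t * Lc t - sin t * Ls t)^2) by ring.
  rewrite H in E1. assert (0 <= (cos t * Lc t - sin t * Ls t)^2) by apply pow2_ge_0. lra.
Qed.

Theorem part_c t : 0 <= t -> Rabs (si t) <= arccot t /\ (Rabs (si t) = arccot t -> t = 0).
Proof.
  intros Ht. destruct (Req_dec t 0) as [->|Ht0].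
  - split; auto. unfold si. fold S0. unfold arccot. rewrite atan_0.
    pose proof S0_le. pose proof S0_ge. rewrite Rabs_Ropp, Rabs_pos_eq by lra. lra.
  - assert (Htp : 0 < t) by lra.
    assert (Hlt : Rabs (si t) < arccot t).
    { rewrite si_val by auto. fold (Gs t). rewrite Rabs_Ropp.
      destruct (Rle_lt_dec t (9/10)) as [H1|H1].
      + rewrite Rabs_pos_eq by (apply Gs_nonneg; lra).
        pose proof (S0_split t Htp). pose proof S0_le.
        destruct (RInt_sinu_bounds t ltac:(lra)) as [HR _].
        pose proof (atan_ub_P5 t ltac:(lra)).
        assert (0 < t^3 * (5/18 - t^2/5)) by (apply Rmult_lt_0_compat; [apply pow_lt; lra| nra]).
        assert (t - t^3/3 + t^5/5 < t - t^3/18) by (replace (t^5) with (t^3*t^2) by ring; nra).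
        unfold arccot. lra.
      + pose proof (Gs_le_Cmod t Htp). pose proof (E_lt_arccot t ltac:(lra)). lra. }
    split. lra. intros; lra.
Qed.

Theorem proposition3 :
  (forall t : R, 0 < t -> Cmod (E t) < M t) /\
  (exists t0 t1 : R, 0 < t1 /\ t1 < t0 /\ t0 < 1 /\
     (forall t : R, t > t0 -> M t < arccot t) /\
     (forall t : R, t > t1 -> Cmod (E t) < arccot t)) /\
  (forall t : R, 0 <= t ->
     Rabs (si t) <= arccot t /\ (Rabs (si t) = arccot t -> t = 0)).
Proof.
  split; [|split].
  - exact part_a.
  - exists (95/100), (9/10). split; [lra|split; [lra|split; [lra|split]]].
    + intros t Ht. apply M_lt_arccot. lra.
    + intros t Ht. apply E_lt_arccot. lra.
  - exact part_c.
Qed.
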